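(* Let $\mathbf{m}_0=(x_0,y_0),\mathbf{m}_1=(x_1,y_1),\mathbf{m}_2=(x_2,y_2)\in\mathbb{R}^2$ be non-collinear and let $\tilde{E}$ be the bifurcation curve, i.e. the degree-5 plane algebraic curve with Cartesian equation $F(\mathbf{x})=0$. Then $\tilde{E}$ has three real ideal points $[x_1-x_2:y_1-y_2:0]$, $[x_2-x_0:y_2-y_0:0]$, $[x_0-x_1:y_0-y_1:0]$ and two complex ideal points $[1:i:0]$, $[1:-i:0]$. The three real asymptotic lines of $\tilde{E}$ have Cartesian equations \[ L_0:\ 4\ast(\mathbf{d}_{12}\wedge\mathbf{d}_0(\mathbf{x}))-3W=0,\quad L_1:\ 4\ast(\mathbf{d}_{20}\wedge\mathbf{d}_1(\mathbf{x}))-3W=0,\quad L_2:\ 4\ast(\mathbf{d}_{01}\wedge\mathbf{d}_2(\mathbf{x}))-3W=0. \] Finally, $L_0\cap L_1\cap L_2=\emptyset$.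
   Context: Notation: for $\mathbf{u}=(u_1,u_2),\mathbf{v}=(v_1,v_2)\in\mathbb{R}^2$, $\ast(\mathbf{u}\wedge\mathbf{v})=u_1v_2-u_2v_1$. $\mathbf{d}_i(\mathbf{x})=\mathbf{x}-\mathbf{m}_i$, $\mathbf{d}_{ji}=\mathbf{m}_j-\mathbf{m}_i$, $d_i(\mathbf{x})=\Vert\mathbf{d}_i(\mathbf{x})\Vert$, $d_{ji}=\Vert\mathbf{d}_{ji}\Vert$, $W=\ast(\mathbf{d}_{10}\wedge\mathbf{d}_{20})$. Bifurcation curve: with TDOA map $\boldsymbol{\tau}_2(\mathbf{x})=(d_1(\mathbf{x})-d_0(\mathbf{x}),d_2(\mathbf{x})-d_0(\mathbf{x}))$ and ellipse $E:\Vert\tau_2\mathbf{d}_{10}-\tau_1\mathbf{d}_{20}\Vert^2-W^2=0$, $\tilde{E}=\boldsymbol{\tau}_2^{-1}(E)$, whose Cartesian equation is $F(\mathbf{x})=0$ with $F=Q^4-8Q^2(P_{01}^2+P_{12}^2+P_{20}^2)+64QP_{01}P_{12}P_{20}+16(P_{01}^4+P_{12}^4+P_{20}^4)-32(P_{01}^2P_{12}^2+P_{12}^2P_{20}^2+P_{20}^2P_{01}^2)$, a polynomial of degree 5 in $(x,y)$, where $\mathbf{D}_0(\mathbf{x})=d_0(\mathbf{x})\mathbf{d}_{12}$, $\mathbf{D}_1(\mathbf{x})=d_1(\mathbf{x})\mathbf{d}_{20}$, $\mathbf{D}_2(\mathbf{x})=d_2(\mathbf{x})\mathbf{d}_{01}$,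 $Q(\mathbf{x})=\sum_i\Vert\mathbf{D}_i(\mathbf{x})\Vert^2-W^2$, $P_{ij}(\mathbf{x})=\mathbf{D}_i(\mathbf{x})\cdot\mathbf{D}_j(\mathbf{x})$. Projective conventions: embed the affine plane into $\mathbb{P}^2$ via $x=X/U$, $y=Y/U$, with ideal line $U=0$; the ideal points of a curve are its intersections with the ideal line (over $\mathbb{C}$); an asymptotic line is an affine line tangent to the curve at one of its smooth ideal points. *)

(* Defs.v *)
From Stdlib Require Import Rdefinitions.
From HB Require Import structures.
From mathcomp Require Import all_boot all_order all_algebra.
From mathcomp Require Import Rstruct.
From mathcomp Require Import mpoly complex.

Set Implicit Arguments.
Unset Strict Implicit.
Unset Printing Implicit Defensive.

Import Order.TTheory GRing.Theory Num.Theory.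
Local Open Scope ring_scope.

Notation RR := (R : rcfType).

(* 2D cross product  *(u /\ v) = u1 v2 - u2 v1  and dot product. *)
Definition cross (u v : RR * RR) : RR := u.1 * v.2 - u.2 * v.1.
Definition dot (u v : RR * RR) : RR := u.1 * v.1 + u.2 * v.2.
Definition vsub (u v : RR * RR) : RR * RR := (u.1 - v.1, u.2 - v.2).

Section Bifurcation.
Variables (m0 m1 m2 : RR * RR).

Definition d12 := vsub m1 m2.
Definition d20 := vsub m2 m0.
Definition d01 := vsub m0 m1.
Definition d10 := vsub m1 m0.
Definition Wc : RR := cross d10 d20.

Definition Xp : {mpoly RR[2]} := 'X_0.
Definition Yp : {mpoly RR[2]} := 'X_1.

Definition sqdist (m : RR * RR) : {mpoly RR[2]} :=
  (Xp - m.1%:MP) ^+ 2 + (Yp - m.2%:MP) ^+ 2.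

(* D_0 = d_0 d12, D_1 = d_1 d20, D_2 = d_2 d01.  Hence
   ||D_i||^2 = d_i^2 ||e_i||^2 and P_ij = d_i d_j (e_i . e_j),
   where e_0 = d12, e_1 = d20, e_2 = d01.  F only involves the even
   combinations P_ij^2 and P01 P12 P20, which are polynomials: *)
Definition sq0 := sqdist m0.
Definition sq1 := sqdist m1.
Definition sq2 := sqdist m2.

Definition Qp : {mpoly RR[2]} :=
  (dot d12 d12) *: sq0 + (dot d20 d20) *: sq1 + (dot d01 d01) *: sq2
  - (Wc ^+ 2)%:MP.
Definition P01sq : {mpoly RR[2]} := ((dot d12 d20) ^+ 2) *: (sq0 * sq1).
Definition P12sq : {mpoly RR[2]} := ((dot d20 d01) ^+ 2) *: (sq1 * sq2).
Definition P20sq : {mpoly RR[2]} := ((dot d01 d12) ^+ 2) *: (sq2 * sq0).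
Definition Pprod : {mpoly RR[2]} :=
  (dot d12 d20 * dot d20 d01 * dot d01 d12) *: (sq0 * sq1 * sq2).

Definition Fbif : {mpoly RR[2]} :=
  Qp ^+ 4 - 8%:R *: (Qp ^+ 2 * (P01sq + P12sq + P20sq))
  + 64%:R *: (Qp * Pprod)
  + 16%:R *: (P01sq ^+ 2 + P12sq ^+ 2 + P20sq ^+ 2)
  - 32%:R *: (P01sq * P12sq + P12sq * P20sq + P20sq * P01sq).

End Bifurcation.

Definition homogenize (K : nzRingType) (p : {mpoly K[2]}) : {mpoly K[3]} :=
  let d := (msize p).-1 in
  \sum_(m <- msupp p)
     p@_m *: ('X_0 ^+ (m (0 : 'I_2)) * 'X_1 ^+ (m (1 : 'I_2))
              * 'X_2 ^+ (d - mdeg m)).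

Definition pt3 (K : Type) (X Y U : K) : 'I_3 -> K :=
  fun i => if val i == 0%N then X else if val i == 1%N then Y else U.

Definition homogC (p : {mpoly RR[2]}) : {mpoly RR[i][3]} :=
  map_mpoly (real_complex RR) (homogenize p).

Definition ideal_point (p : {mpoly RR[2]}) (X Y : RR[i]) : Prop :=
  (X, Y) <> (0, 0) /\ (homogC p).@[pt3 X Y 0] = 0.

(* [X : Y : 0] equals [a : b : 0] in P^2 (both nonzero). *)
Definition same_dir (X Y a b : RR[i]) : Prop := X * b - Y * a = 0.

Definition gradh (p : {mpoly RR[2]}) (X Y U : RR) : RR * RR * RR :=
  (((homogenize p)^`M(0 : 'I_3)).@[pt3 X Y U],
   ((homogenize p)^`M(1 : 'I_3)).@[pt3 X Y U],
   ((homogenize p)^`M(2 : 'I_3)).@[pt3 X Y U]).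

(* The real ideal point [a : b : 0] of the curve p = 0 is a smooth point
   of its projective closure, the tangent line there,
   g1 X + g2 Y + g3 U = 0 with (g1,g2,g3) the gradient, is an affine line
   (i.e. not the ideal line U = 0), and its affine part is exactly the
   line {x | L x = 0}. *)
Definition asymptote_at (p : {mpoly RR[2]}) (a b : RR)
    (L : RR * RR -> RR) : Prop :=
  let g := gradh p a b 0 in
  [/\ g <> (0, 0, 0), (g.1.1, g.1.2) <> (0, 0) &
   forall x : RR * RR, (g.1.1 * x.1 + g.1.2 * x.2 + g.2 = 0) <-> (L x = 0)].

Definition Lline (m0 m1 m2 : RR * RR) (i : nat) (x : RR * RR) : RR :=
  let W := Wc m0 m1 m2 in
  match i with
  | 0%N => 4%:R * cross (d12 m1 m2) (vsub x m0) - 3%:R * W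
  | 1%N => 4%:R * cross (d20 m0 m2) (vsub x m1) - 3%:R * W
  | _ => 4%:R * cross (d01 m0 m1) (vsub x m2) - 3%:R * W
  end.

(* Main.v *)
Require Import Defs.
From Stdlib Require Import Rdefinitions.
From HB Require Import structures.
From mathcomp Require Import all_boot all_order all_algebra.
From mathcomp Require Import Rstruct.
From mathcomp Require Import mpoly complex.
From mathcomp Require Import ring.
Import Order.TTheory GRing.Theory Num.Theory.
Local Open Scope ring_scope.


Notation o30 := ((0 : 'I_3)%R) (only parsing).
Notation o31 := ((1 : 'I_3)%R) (only parsing).
Notation o32 := ((2 : 'I_3)%R) (only parsing).
Notation o20 := ((0 : 'I_2)%R) (only parsing).
Notation o21 := ((1 : 'I_2)%R) (only parsing).

Definition pr3 (m : 'X_{1..3}) : 'X_{1..2} :=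
  (U_(o20) *+ m o30 + U_(o21) *+ m o31)%MM.
Definition hm (m : 'X_{1..2}) (k : nat) : 'X_{1..3} :=
  (U_(o30) *+ m o20 + U_(o31) *+ m o21 + U_(o32) *+ k)%MM.

Lemma pr3E m : (pr3 m o20 = m o30) /\ (pr3 m o21 = m o31).
Proof. by rewrite /pr3 !mnmDE !mulmnE !mnm1E /= !mul1n !mul0n ?addn0. Qed.

Lemma hmE m k : [/\ hm m k o30 = m o20, hm m k o31 = m o21
   & hm m k o32 = k].
Proof. by rewrite /hm !mnmDE !mulmnE !mnm1E /= !mul1n !mul0n ?addn0. Qed.

Lemma ord3P (P : 'I_3 -> Prop) : P 0 -> P 1 -> P 2 -> forall i, P i.
Proof.
move=> h0 h1 h2 [[|[|[|i]]] Hi] //.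
- by have -> : Ordinal Hi = 0 by apply/val_inj.
- by have -> : Ordinal Hi = 1 by apply/val_inj.
- by have -> : Ordinal Hi = 2 by apply/val_inj.
Qed.

Lemma ord2P (P : 'I_2 -> Prop) : P 0 -> P 1 -> forall i, P i.
Proof.
move=> h0 h1 [[|[|i]] Hi] //.
- by have -> : Ordinal Hi = 0 by apply/val_inj.
- by have -> : Ordinal Hi = 1 by apply/val_inj.
Qed.

Lemma mdeg3 (m : 'X_{1..3}) : mdeg m = (m o30 + m o31 + m o32)%N.
Proof.
rewrite mdegE !big_ord_recr big_ord0 /= add0n.
by congr (_ + _ + _)%N; congr (m _); apply/val_inj.
Qed.

Lemma mdeg2 (m : 'X_{1..2}) : mdeg m = (m o20 + m o21)%N.
Proof.
rewrite mdegE !big_ord_recr big_ord0 /= add0n.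
by congr (_ + _)%N; congr (m _); apply/val_inj.
Qed.

Lemma pr_hm m k : pr3 (hm m k) = m.
Proof.
apply/mnmP; apply: ord2P; have [h1 h2] := pr3E (hm m k); have [h3 h4 h5] := hmE m k.
  by rewrite h1 h3.
by rewrite h2 h4.
Qed.

Lemma hm_pr (nu : 'X_{1..3}) k : nu o32 = k -> hm (pr3 nu) k = nu.
Proof.
move=> Hk; apply/mnmP; apply: ord3P; have [h1 h2] := pr3E nu; have [h3 h4 h5] := hmE (pr3 nu) k.
- by rewrite h3 h1.
- by rewrite h4 h2.
- by rewrite h5.
Qed.

Lemma mdeg_hm m k : mdeg (hm m k) = (mdeg m + k)%N.
Proof. by rewrite mdeg3 mdeg2; have [-> -> ->] := hmE m k. Qed.

Lemma mdeg_pr (nu : 'X_{1..3}) : (mdeg (pr3 nu) + nu o32)%N = mdeg nu.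
Proof. by rewrite mdeg3 mdeg2; have [-> ->] := pr3E nu. Qed.

Lemma coef_sum n (q : {mpoly RR[n]}) k :
  \sum_(m <- msupp q) q@_m * (m == k)%:R = q@_k.
Proof.
have -> : q@_k = (\sum_(m <- msupp q) q@_m *: 'X_[m])@_k by rewrite -mpolyE.
rewrite raddf_sum /=; apply: eq_bigr => m _.
by rewrite mcoeffZ mcoeffX.
Qed.

Lemma Xhm (m : 'X_{1..2}) k : 'X_o30 ^+ (m o20) * 'X_o31 ^+ (m o21) * 'X_o32 ^+ k
   = 'X_[hm m k] :> {mpoly RR[3]}.
Proof. by rewrite /hm !mpolyXD -!mpolyXn. Qed.

Definition lq2 : 3.-tuple {mpoly RR[2]} := [tuple 'X_o20; 'X_o21; 1].

Lemma comp_coef (G : {mpoly RR[3]}) m :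
  (G \mPo lq2)@_m = \sum_(nu <- msupp G) G@_nu * (pr3 nu == m)%:R.
Proof.
rewrite comp_mpolyE raddf_sum /=; apply: eq_bigr => nu _; rewrite mcoeffZ.
congr (_ * _).
have -> : \prod_(i < 3) tnth lq2 i ^+ nu i = 'X_[pr3 nu].
  rewrite !big_ord_recr big_ord0 /= mul1r.
  rewrite /pr3 mpolyXD -!mpolyXn.
  have -> : tnth lq2 (widen_ord (leqnSn 2) ord_max) = 'X_o21 by [].
  have -> : tnth lq2 (widen_ord (leqnSn 2) (widen_ord (leqnSn 1) ord_max)) = 'X_o20 by [].
  have -> : tnth lq2 ord_max = 1 by [].
  rewrite expr1n mulr1; congr (_ ^+ _ * _ ^+ _); congr (nu _); exact/val_inj.
by rewrite mcoeffX.
Qed.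

Lemma pt3_prod (X Y : RR) (nu : 'X_{1..3}) :
  \prod_(i < 3) pt3 X Y 0 i ^+ nu i = X ^+ nu o30 * Y ^+ nu o31 * 0 ^+ nu o32.
Proof.
rewrite !big_ord_recr big_ord0 /= mul1r.
by congr (_ ^+ _ * _ ^+ _ * _ ^+ _); congr (nu _); apply/val_inj.
Qed.

Lemma homog_eq (p : {mpoly RR[2]}) (G : {mpoly RR[3]}) (n : nat) (X Y : RR) :
  G \is n.-homog -> G \mPo lq2 = p -> G.@[pt3 X Y 0] != 0 -> homogenize p = G.
Proof.
move=> hG hp hnz.
have deg_supp : {in msupp G, forall nu, mdeg nu = n} := dhomog_mf hG.
have pc : forall m, p@_m = if (mdeg m <= n)%N then G@_(hm m (n - mdeg m)) else 0.
  move=> m; rewrite -hp comp_coef.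
  case: ifP => hm_le.
  - rewrite -coef_sum; apply: eq_big_seq => nu nu_in; congr (_ * _%:R); congr (nat_of_bool _).
    apply/idP/idP => /eqP E; apply/eqP; last by rewrite E pr_hm.
    rewrite -E; apply/esym/hm_pr; rewrite -(deg_supp nu nu_in) -mdeg_pr.
    by rewrite addKn.
  - rewrite big1_seq // => nu /andP [_ nu_in]; case: eqP => [E|]; last by rewrite mulr0.
    exfalso; move: hm_le; rewrite -E -(deg_supp nu nu_in) -mdeg_pr.
    by rewrite leq_addr.
have supp_le : forall m, m \in msupp p -> (mdeg m <= n)%N.
  move=> m; rewrite mcoeff_msupp pc; case: ifP => //.
  by rewrite eqxx.
have hsz : msize p = n.+1.
  apply/eqP; rewrite eqn_leq; apply/andP; split.
    rewrite msizeE; apply/bigmax_leqP_seq => m m_in _.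
    by rewrite ltnS supp_le.
  case: (boolP (has (fun nu : 'X_{1..3} => nu o32 == 0%N) (msupp G))) => [/hasP [nu nu_in /eqP nu2] | /hasPn H].
    have dm : mdeg (pr3 nu) = n by rewrite -(deg_supp nu nu_in) -mdeg_pr nu2 addn0.
    have : pr3 nu \in msupp p.
      rewrite mcoeff_msupp pc dm leqnn subnn hm_pr //.
      by rewrite -mcoeff_msupp.
    by move/msize_mdeg_lt; rewrite dm.
  exfalso; move: hnz; rewrite mevalE big1_seq ?eqxx // => nu /andP [_ nu_in].
  rewrite pt3_prod; move: (H nu nu_in); case: (nu o32) => // k _.
  by rewrite expr0n /= !mulr0.
apply/mpolyP => mu.
rewrite /homogenize hsz /= raddf_sum /=.
under eq_bigr do rewrite mcoeffZ Xhm mcoeffX.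
case: (eqVneq (mdeg mu) n) => dmu.
  transitivity (\sum_(m <- msupp p) p@_m * (m == pr3 mu)%:R).
    apply: eq_big_seq => m m_in; congr (_ * _%:R); congr (nat_of_bool _).
    apply/idP/idP => /eqP E; apply/eqP; first by rewrite -E pr_hm.
    rewrite E; apply: hm_pr; rewrite -dmu -mdeg_pr.
    by rewrite addKn.
  rewrite coef_sum pc.
  have dle : (mdeg (pr3 mu) <= n)%N by rewrite -dmu -mdeg_pr leq_addr.
  rewrite dle hm_pr //; rewrite -dmu -mdeg_pr.
  by rewrite addKn.
rewrite (dhomog_nemf_coeff hG) //.
rewrite big1_seq // => m /andP [_ m_in]; case: eqP => [E|]; last by rewrite mulr0.
exfalso; move: dmu; rewrite -E mdeg_hm subnKC ?eqxx //.
exact: supp_le.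
Qed.

Definition c500 {K : comNzRingType} (a1 a2 b1 b2 : K) : K :=
  (- 64 * a2^+4 * b1 * b2^+6 - 128 * a2^+4 * b1^+3 * b2^+4 - 64 * a2^+4 * b1^+5 * b2^+2 + 192 * a2^+5 * b1 * b2^+5 + 256 * a2^+5 * b1^+3 * b2^+3 + 64 * a2^+5 * b1^+5 * b2 - 192 * a2^+6 * b1 * b2^+4 - 192 * a2^+6 * b1^+3 * b2^+2 + 64 * a2^+7 * b1 * b2^+3 + 64 * a2^+7 * b1^+3 * b2 + 64 * a1 * a2^+3 * b2^+7 + 128 * a1 * a2^+3 * b1^+2 * b2^+5 + 64 * a1 * a2^+3 * b1^+4 * b2^+3 - 192 * a1 * a2^+4 * b2^+6 - 128 * a1 * a2^+4 * b1^+2 * b2^+4 + 64 * a1 * a2^+4 * b1^+4 * b2^+2 + 192 * a1 * a2^+5 * b2^+5 + 64 * a1 * a2^+5 * b1^+2 * b2^+3 - 128 * a1 * a2^+5 * b1^+4 * b2 - 64 * a1 * a2^+6 * b2^+4 - 64 * a1 * a2^+6 * b1^+2 * b2^+2 - 64 * a1^+2 * a2^+2 * b1 * b2^+6 - 128 * a1^+2 * a2^+2 * b1^+3 * b2^+4 - 64 * a1^+2 * a2^+2 * b1^+5 * b2^+2 + 64 * a1^+2 * a2^+3 * b1 * b2^+5 + 128 * a1^+2 * a2^+3 * b1^+3 * b2^+3 + 64 * a1^+2 * a2^+3 * b1^+5 * b2 - 128 * a1^+2 * a2^+4 * b1 * b2^+4 - 128 * a1^+2 * a2^+4 * b1^+3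 * b2^+2 + 128 * a1^+2 * a2^+5 * b1 * b2^+3 + 128 * a1^+2 * a2^+5 * b1^+3 * b2 + 64 * a1^+3 * a2 * b2^+7 + 128 * a1^+3 * a2 * b1^+2 * b2^+5 + 64 * a1^+3 * a2 * b1^+4 * b2^+3 - 192 * a1^+3 * a2^+2 * b2^+6 - 128 * a1^+3 * a2^+2 * b1^+2 * b2^+4 + 64 * a1^+3 * a2^+2 * b1^+4 * b2^+2 + 256 * a1^+3 * a2^+3 * b2^+5 + 128 * a1^+3 * a2^+3 * b1^+2 * b2^+3 - 128 * a1^+3 * a2^+3 * b1^+4 * b2 - 128 * a1^+3 * a2^+4 * b2^+4 - 128 * a1^+3 * a2^+4 * b1^+2 * b2^+2 - 128 * a1^+4 * a2 * b1 * b2^+5 - 128 * a1^+4 * a2 * b1^+3 * b2^+3 + 64 * a1^+4 * a2^+2 * b1 * b2^+4 + 64 * a1^+4 * a2^+2 * b1^+3 * b2^+2 + 64 * a1^+4 * a2^+3 * b1 * b2^+3 + 64 * a1^+4 * a2^+3 * b1^+3 * b2 + 64 * a1^+5 * a2 * b2^+5 + 64 * a1^+5 * a2 * b1^+2 * b2^+3 - 64 * a1^+5 * a2^+2 * b2^+4 - 64 * a1^+5 * a2^+2 * b1^+2 * b2^+2).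

Definition c410 {K : comNzRingType} (a1 a2 b1 b2 : K) : K :=
  (128 * a2^+4 * b1^+2 * b2^+5 + 256 * a2^+4 * b1^+4 * b2^+3 + 128 * a2^+4 * b1^+6 * b2 - 320 * a2^+5 * b1^+2 * b2^+4 - 384 * a2^+5 * b1^+4 * b2^+2 - 64 * a2^+5 * b1^+6 + 256 * a2^+6 * b1^+2 * b2^+3 + 256 * a2^+6 * b1^+4 * b2 - 64 * a2^+7 * b1^+2 * b2^+2 - 64 * a2^+7 * b1^+4 - 64 * a1 * a2^+3 * b1 * b2^+6 - 128 * a1 * a2^+3 * b1^+3 * b2^+4 - 64 * a1 * a2^+3 * b1^+5 * b2^+2 + 64 * a1 * a2^+4 * b1 * b2^+5 - 256 * a1 * a2^+4 * b1^+3 * b2^+3 - 320 * a1 * a2^+4 * b1^+5 * b2 + 64 * a1 * a2^+5 * b1 * b2^+4 + 192 * a1 * a2^+5 * b1^+3 * b2^+2 + 128 * a1 * a2^+5 * b1^+5 - 64 * a1 * a2^+6 * b1 * b2^+3 - 64 * a1 * a2^+6 * b1^+3 * b2 - 64 * a1^+2 * a2^+2 * b2^+7 + 192 * a1^+2 * a2^+2 * b1^+4 * b2^+3 + 128 * a1^+2 * a2^+2 * b1^+6 * b2 + 256 * a1^+2 * a2^+3 * b2^+6 + 192 * a1^+2 * a2^+3 * b1^+2 * b2^+4 - 128 * a1^+2 * a2^+3 * b1^+4 * b2^+2 - 64 * a1^+2 * a2^+3 * b1^+6 - 320 * a1^+2 * a2^+4 * b2^+5 + 192 * a1^+2 * a2^+4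 * b1^+2 * b2^+3 + 512 * a1^+2 * a2^+4 * b1^+4 * b2 + 128 * a1^+2 * a2^+5 * b2^+4 - 128 * a1^+2 * a2^+5 * b1^+4 - 64 * a1^+3 * a2 * b1 * b2^+6 - 128 * a1^+3 * a2 * b1^+3 * b2^+4 - 64 * a1^+3 * a2 * b1^+5 * b2^+2 + 192 * a1^+3 * a2^+2 * b1 * b2^+5 - 128 * a1^+3 * a2^+2 * b1^+3 * b2^+3 - 320 * a1^+3 * a2^+2 * b1^+5 * b2 - 256 * a1^+3 * a2^+3 * b1 * b2^+4 - 128 * a1^+3 * a2^+3 * b1^+3 * b2^+2 + 128 * a1^+3 * a2^+3 * b1^+5 - 128 * a1^+3 * a2^+4 * b1 * b2^+3 - 128 * a1^+3 * a2^+4 * b1^+3 * b2 - 64 * a1^+4 * b2^+7 - 128 * a1^+4 * b1^+2 * b2^+5 - 64 * a1^+4 * b1^+4 * b2^+3 + 256 * a1^+4 * a2 * b2^+6 + 512 * a1^+4 * a2 * b1^+2 * b2^+4 + 256 * a1^+4 * a2 * b1^+4 * b2^+2 - 384 * a1^+4 * a2^+2 * b2^+5 - 128 * a1^+4 * a2^+2 * b1^+2 * b2^+3 + 256 * a1^+4 * a2^+2 * b1^+4 * b2 + 256 * a1^+4 * a2^+3 * b2^+4 + 192 * a1^+4 * a2^+3 * b1^+2 * b2^+2 - 64 * a1^+4 * a2^+3 * b1^+4 + 128 * a1^+5 * b1 * b2^+5 + 128 * a1^+5 * b1^+3 * b2^+3 - 320 * a1^+5 * a2 * b1 * b2^+4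 - 320 * a1^+5 * a2 * b1^+3 * b2^+2 - 64 * a1^+5 * a2^+2 * b1 * b2^+3 - 64 * a1^+5 * a2^+2 * b1^+3 * b2 - 64 * a1^+6 * b2^+5 - 64 * a1^+6 * b1^+2 * b2^+3 + 128 * a1^+6 * a2 * b2^+4 + 128 * a1^+6 * a2 * b1^+2 * b2^+2).

Definition c320 {K : comNzRingType} (a1 a2 b1 b2 : K) : K :=
  (- 64 * a2^+4 * b1 * b2^+6 - 192 * a2^+4 * b1^+3 * b2^+4 - 192 * a2^+4 * b1^+5 * b2^+2 - 64 * a2^+4 * b1^+7 + 192 * a2^+5 * b1 * b2^+5 + 384 * a2^+5 * b1^+3 * b2^+3 + 192 * a2^+5 * b1^+5 * b2 - 192 * a2^+6 * b1 * b2^+4 - 256 * a2^+6 * b1^+3 * b2^+2 - 64 * a2^+6 * b1^+5 + 64 * a2^+7 * b1 * b2^+3 + 64 * a2^+7 * b1^+3 * b2 + 64 * a1 * a2^+3 * b2^+7 + 64 * a1 * a2^+3 * b1^+2 * b2^+5 - 64 * a1 * a2^+3 * b1^+4 * b2^+3 - 64 * a1 * a2^+3 * b1^+6 * b2 - 192 * a1 * a2^+4 * b2^+6 + 128 * a1 * a2^+4 * b1^+2 * b2^+4 + 576 * a1 * a2^+4 * b1^+4 * b2^+2 + 256 * a1 * a2^+4 * b1^+6 + 192 * a1 * a2^+5 * b2^+5 - 256 * a1 * a2^+5 * b1^+2 * b2^+3 - 448 * a1 * a2^+5 * b1^+4 * b2 - 64 * a1 * a2^+6 * b2^+4 + 64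 * a1 * a2^+6 * b1^+2 * b2^+2 + 128 * a1 * a2^+6 * b1^+4 + 64 * a1^+2 * a2^+2 * b1 * b2^+6 + 64 * a1^+2 * a2^+2 * b1^+3 * b2^+4 - 64 * a1^+2 * a2^+2 * b1^+5 * b2^+2 - 64 * a1^+2 * a2^+2 * b1^+7 - 256 * a1^+2 * a2^+3 * b1 * b2^+5 + 256 * a1^+2 * a2^+3 * b1^+5 * b2 + 128 * a1^+2 * a2^+4 * b1 * b2^+4 - 256 * a1^+2 * a2^+4 * b1^+3 * b2^+2 - 384 * a1^+2 * a2^+4 * b1^+5 + 64 * a1^+2 * a2^+5 * b1 * b2^+3 + 64 * a1^+2 * a2^+5 * b1^+3 * b2 + 64 * a1^+3 * a2 * b2^+7 + 64 * a1^+3 * a2 * b1^+2 * b2^+5 - 64 * a1^+3 * a2 * b1^+4 * b2^+3 - 64 * a1^+3 * a2 * b1^+6 * b2 - 256 * a1^+3 * a2^+2 * b2^+6 - 256 * a1^+3 * a2^+2 * b1^+2 * b2^+4 + 256 * a1^+3 * a2^+2 * b1^+4 * b2^+2 + 256 * a1^+3 * a2^+2 * b1^+6 + 384 * a1^+3 * a2^+3 * b2^+5 - 384 * a1^+3 * a2^+3 * b1^+4 * b2 - 192 * a1^+3 * a2^+4 * b2^+4 + 64 * a1^+3 * a2^+4 * b1^+2 * b2^+2 + 256 * a1^+3 * a2^+4 * b1^+4 + 128 * a1^+4 * b1 * b2^+6 + 256 * a1^+4 * b1^+3 * b2^+4 + 128 * a1^+4 * b1^+5 * b2^+2 - 448 *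 a1^+4 * a2 * b1 * b2^+5 - 384 * a1^+4 * a2 * b1^+3 * b2^+3 + 64 * a1^+4 * a2 * b1^+5 * b2 + 576 * a1^+4 * a2^+2 * b1 * b2^+4 + 256 * a1^+4 * a2^+2 * b1^+3 * b2^+2 - 320 * a1^+4 * a2^+2 * b1^+5 - 64 * a1^+4 * a2^+3 * b1 * b2^+3 - 64 * a1^+4 * a2^+3 * b1^+3 * b2 - 64 * a1^+5 * b2^+6 - 384 * a1^+5 * b1^+2 * b2^+4 - 320 * a1^+5 * b1^+4 * b2^+2 + 192 * a1^+5 * a2 * b2^+5 + 256 * a1^+5 * a2 * b1^+2 * b2^+3 + 64 * a1^+5 * a2 * b1^+4 * b2 - 192 * a1^+5 * a2^+2 * b2^+4 - 64 * a1^+5 * a2^+2 * b1^+2 * b2^+2 + 128 * a1^+5 * a2^+2 * b1^+4 + 256 * a1^+6 * b1 * b2^+4 + 256 * a1^+6 * b1^+3 * b2^+2 - 64 * a1^+6 * a2 * b1 * b2^+3 - 64 * a1^+6 * a2 * b1^+3 * b2 - 64 * a1^+7 * b2^+4 - 64 * a1^+7 * b1^+2 * b2^+2).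

Definition c230 {K : comNzRingType} (a1 a2 b1 b2 : K) : K :=
  (128 * a2^+4 * b1^+2 * b2^+5 + 256 * a2^+4 * b1^+4 * b2^+3 + 128 * a2^+4 * b1^+6 * b2 - 320 * a2^+5 * b1^+2 * b2^+4 - 384 * a2^+5 * b1^+4 * b2^+2 - 64 * a2^+5 * b1^+6 + 256 * a2^+6 * b1^+2 * b2^+3 + 256 * a2^+6 * b1^+4 * b2 - 64 * a2^+7 * b1^+2 * b2^+2 - 64 * a2^+7 * b1^+4 - 64 * a1 * a2^+3 * b1 * b2^+6 - 64 * a1 * a2^+3 * b1^+3 * b2^+4 + 64 * a1 * a2^+3 * b1^+5 * b2^+2 + 64 * a1 * a2^+3 * b1^+7 + 64 * a1 * a2^+4 * b1 * b2^+5 - 384 * a1 * a2^+4 * b1^+3 * b2^+3 - 448 * a1 * a2^+4 * b1^+5 * b2 + 64 * a1 * a2^+5 * b1 * b2^+4 + 256 * a1 * a2^+5 * b1^+3 * b2^+2 + 192 * a1 * a2^+5 * b1^+5 - 64 * a1 * a2^+6 * b1 * b2^+3 - 64 * a1 * a2^+6 * b1^+3 * b2 - 64 * a1^+2 * a2^+2 * b2^+7 - 64 * a1^+2 * a2^+2 * b1^+2 * b2^+5 + 64 * a1^+2 * a2^+2 * b1^+4 * b2^+3 + 64 * a1^+2 * a2^+2 * b1^+6 * b2 + 256 * a1^+2 * a2^+3 * b2^+6 + 256 * a1^+2 * a2^+3 * b1^+2 * b2^+4 - 256 * a1^+2 * a2^+3 * b1^+4 * b2^+2 - 256 * a1^+2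 * a2^+3 * b1^+6 - 320 * a1^+2 * a2^+4 * b2^+5 + 256 * a1^+2 * a2^+4 * b1^+2 * b2^+3 + 576 * a1^+2 * a2^+4 * b1^+4 * b2 + 128 * a1^+2 * a2^+5 * b2^+4 - 64 * a1^+2 * a2^+5 * b1^+2 * b2^+2 - 192 * a1^+2 * a2^+5 * b1^+4 - 64 * a1^+3 * a2 * b1 * b2^+6 - 64 * a1^+3 * a2 * b1^+3 * b2^+4 + 64 * a1^+3 * a2 * b1^+5 * b2^+2 + 64 * a1^+3 * a2 * b1^+7 + 256 * a1^+3 * a2^+2 * b1 * b2^+5 - 256 * a1^+3 * a2^+2 * b1^+5 * b2 - 384 * a1^+3 * a2^+3 * b1 * b2^+4 + 384 * a1^+3 * a2^+3 * b1^+5 - 64 * a1^+3 * a2^+4 * b1 * b2^+3 - 64 * a1^+3 * a2^+4 * b1^+3 * b2 - 64 * a1^+4 * b2^+7 - 192 * a1^+4 * b1^+2 * b2^+5 - 192 * a1^+4 * b1^+4 * b2^+3 - 64 * a1^+4 * b1^+6 * b2 + 256 * a1^+4 * a2 * b2^+6 + 576 * a1^+4 * a2 * b1^+2 * b2^+4 + 128 * a1^+4 * a2 * b1^+4 * b2^+2 - 192 * a1^+4 * a2 * b1^+6 - 384 * a1^+4 * a2^+2 * b2^+5 - 256 * a1^+4 * a2^+2 * b1^+2 * b2^+3 + 128 * a1^+4 * a2^+2 * b1^+4 * b2 + 256 * a1^+4 * a2^+3 * b2^+4 + 64 * a1^+4 * a2^+3 * b1^+2 * b2^+2 - 192 * a1^+4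 * a2^+3 * b1^+4 + 192 * a1^+5 * b1 * b2^+5 + 384 * a1^+5 * b1^+3 * b2^+3 + 192 * a1^+5 * b1^+5 * b2 - 448 * a1^+5 * a2 * b1 * b2^+4 - 256 * a1^+5 * a2 * b1^+3 * b2^+2 + 192 * a1^+5 * a2 * b1^+5 + 64 * a1^+5 * a2^+2 * b1 * b2^+3 + 64 * a1^+5 * a2^+2 * b1^+3 * b2 - 64 * a1^+6 * b2^+5 - 256 * a1^+6 * b1^+2 * b2^+3 - 192 * a1^+6 * b1^+4 * b2 + 128 * a1^+6 * a2 * b2^+4 + 64 * a1^+6 * a2 * b1^+2 * b2^+2 - 64 * a1^+6 * a2 * b1^+4 + 64 * a1^+7 * b1 * b2^+3 + 64 * a1^+7 * b1^+3 * b2).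

Definition c140 {K : comNzRingType} (a1 a2 b1 b2 : K) : K :=
  (- 64 * a2^+4 * b1^+3 * b2^+4 - 128 * a2^+4 * b1^+5 * b2^+2 - 64 * a2^+4 * b1^+7 + 128 * a2^+5 * b1^+3 * b2^+3 + 128 * a2^+5 * b1^+5 * b2 - 64 * a2^+6 * b1^+3 * b2^+2 - 64 * a2^+6 * b1^+5 - 64 * a1 * a2^+3 * b1^+2 * b2^+5 - 128 * a1 * a2^+3 * b1^+4 * b2^+3 - 64 * a1 * a2^+3 * b1^+6 * b2 + 256 * a1 * a2^+4 * b1^+2 * b2^+4 + 512 * a1 * a2^+4 * b1^+4 * b2^+2 + 256 * a1 * a2^+4 * b1^+6 - 320 * a1 * a2^+5 * b1^+2 * b2^+3 - 320 * a1 * a2^+5 * b1^+4 * b2 + 128 * a1 * a2^+6 * b1^+2 * b2^+2 + 128 * a1 * a2^+6 * b1^+4 + 128 * a1^+2 * a2^+2 * b1 * b2^+6 + 192 * a1^+2 * a2^+2 * b1^+3 * b2^+4 - 64 * a1^+2 * a2^+2 * b1^+7 - 320 * a1^+2 * a2^+3 * b1 * b2^+5 - 128 * a1^+2 * a2^+3 * b1^+3 * b2^+3 + 192 * a1^+2 * a2^+3 * b1^+5 * b2 + 256 * a1^+2 * a2^+4 * b1 * b2^+4 - 128 * a1^+2 * a2^+4 * b1^+3 * b2^+2 - 384 * a1^+2 * a2^+4 * b1^+5 - 64 * a1^+2 * a2^+5 * b1 * b2^+3 - 64 * a1^+2 * a2^+5 * b1^+3 * b2 - 64 * a1^+3 *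 a2 * b1^+2 * b2^+5 - 128 * a1^+3 * a2 * b1^+4 * b2^+3 - 64 * a1^+3 * a2 * b1^+6 * b2 - 64 * a1^+3 * a2^+2 * b2^+6 - 128 * a1^+3 * a2^+2 * b1^+2 * b2^+4 + 192 * a1^+3 * a2^+2 * b1^+4 * b2^+2 + 256 * a1^+3 * a2^+2 * b1^+6 + 128 * a1^+3 * a2^+3 * b2^+5 - 128 * a1^+3 * a2^+3 * b1^+2 * b2^+3 - 256 * a1^+3 * a2^+3 * b1^+4 * b2 - 64 * a1^+3 * a2^+4 * b2^+4 + 192 * a1^+3 * a2^+4 * b1^+2 * b2^+2 + 256 * a1^+3 * a2^+4 * b1^+4 + 128 * a1^+4 * b1 * b2^+6 + 256 * a1^+4 * b1^+3 * b2^+4 + 128 * a1^+4 * b1^+5 * b2^+2 - 320 * a1^+4 * a2 * b1 * b2^+5 - 256 * a1^+4 * a2 * b1^+3 * b2^+3 + 64 * a1^+4 * a2 * b1^+5 * b2 + 512 * a1^+4 * a2^+2 * b1 * b2^+4 + 192 * a1^+4 * a2^+2 * b1^+3 * b2^+2 - 320 * a1^+4 * a2^+2 * b1^+5 - 128 * a1^+4 * a2^+3 * b1 * b2^+3 - 128 * a1^+4 * a2^+3 * b1^+3 * b2 - 64 * a1^+5 * b2^+6 - 384 * a1^+5 * b1^+2 * b2^+4 - 320 * a1^+5 * b1^+4 * b2^+2 + 128 * a1^+5 * a2 * b2^+5 + 192 * a1^+5 * a2 * b1^+2 * b2^+3 + 64 * a1^+5 * a2 * b1^+4 * b2 - 128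 * a1^+5 * a2^+2 * b2^+4 + 128 * a1^+5 * a2^+2 * b1^+4 + 256 * a1^+6 * b1 * b2^+4 + 256 * a1^+6 * b1^+3 * b2^+2 - 64 * a1^+6 * a2 * b1 * b2^+3 - 64 * a1^+6 * a2 * b1^+3 * b2 - 64 * a1^+7 * b2^+4 - 64 * a1^+7 * b1^+2 * b2^+2).

Definition c050 {K : comNzRingType} (a1 a2 b1 b2 : K) : K :=
  (64 * a1 * a2^+3 * b1^+3 * b2^+4 + 128 * a1 * a2^+3 * b1^+5 * b2^+2 + 64 * a1 * a2^+3 * b1^+7 - 128 * a1 * a2^+4 * b1^+3 * b2^+3 - 128 * a1 * a2^+4 * b1^+5 * b2 + 64 * a1 * a2^+5 * b1^+3 * b2^+2 + 64 * a1 * a2^+5 * b1^+5 - 64 * a1^+2 * a2^+2 * b1^+2 * b2^+5 - 128 * a1^+2 * a2^+2 * b1^+4 * b2^+3 - 64 * a1^+2 * a2^+2 * b1^+6 * b2 + 64 * a1^+2 * a2^+3 * b1^+2 * b2^+4 - 128 * a1^+2 * a2^+3 * b1^+4 * b2^+2 - 192 * a1^+2 * a2^+3 * b1^+6 + 64 * a1^+2 * a2^+4 * b1^+2 * b2^+3 + 64 * a1^+2 * a2^+4 * b1^+4 * b2 - 64 * a1^+2 * a2^+5 * b1^+2 * b2^+2 - 64 * a1^+2 * a2^+5 * b1^+4 + 64 * a1^+3 * a2 * b1^+3 * b2^+4 + 128 * a1^+3 * a2 * b1^+5 * b2^+2 + 64 * a1^+3 * a2 * b1^+7 + 64 * a1^+3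 * a2^+2 * b1 * b2^+5 + 128 * a1^+3 * a2^+2 * b1^+3 * b2^+3 + 64 * a1^+3 * a2^+2 * b1^+5 * b2 - 128 * a1^+3 * a2^+3 * b1 * b2^+4 + 128 * a1^+3 * a2^+3 * b1^+3 * b2^+2 + 256 * a1^+3 * a2^+3 * b1^+5 + 64 * a1^+3 * a2^+4 * b1 * b2^+3 + 64 * a1^+3 * a2^+4 * b1^+3 * b2 - 64 * a1^+4 * b1^+2 * b2^+5 - 128 * a1^+4 * b1^+4 * b2^+3 - 64 * a1^+4 * b1^+6 * b2 + 64 * a1^+4 * a2 * b1^+2 * b2^+4 - 128 * a1^+4 * a2 * b1^+4 * b2^+2 - 192 * a1^+4 * a2 * b1^+6 - 128 * a1^+4 * a2^+2 * b1^+2 * b2^+3 - 128 * a1^+4 * a2^+2 * b1^+4 * b2 - 128 * a1^+4 * a2^+3 * b1^+2 * b2^+2 - 128 * a1^+4 * a2^+3 * b1^+4 + 64 * a1^+5 * b1 * b2^+5 + 256 * a1^+5 * b1^+3 * b2^+3 + 192 * a1^+5 * b1^+5 * b2 - 128 * a1^+5 * a2 * b1 * b2^+4 + 64 * a1^+5 * a2 * b1^+3 * b2^+2 + 192 * a1^+5 * a2 * b1^+5 + 128 * a1^+5 * a2^+2 * b1 * b2^+3 + 128 * a1^+5 * a2^+2 * b1^+3 * b2 - 192 * a1^+6 * b1^+2 * b2^+3 - 192 * a1^+6 * b1^+4 * b2 - 64 * a1^+6 * a2 * b1^+2 * b2^+2 - 64 * a1^+6 * a2 * b1^+4 + 64 *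 a1^+7 * b1 * b2^+3 + 64 * a1^+7 * b1^+3 * b2).

Definition c401 {K : comNzRingType} (a1 a2 b1 b2 : K) : K :=
  (16 * a2^+4 * b2^+8 + 32 * a2^+4 * b1^+2 * b2^+6 + 16 * a2^+4 * b1^+4 * b2^+4 - 64 * a2^+5 * b2^+7 - 160 * a2^+5 * b1^+2 * b2^+5 - 160 * a2^+5 * b1^+4 * b2^+3 - 64 * a2^+5 * b1^+6 * b2 + 96 * a2^+6 * b2^+6 + 192 * a2^+6 * b1^+2 * b2^+4 + 240 * a2^+6 * b1^+4 * b2^+2 + 16 * a2^+6 * b1^+6 - 64 * a2^+7 * b2^+5 - 32 * a2^+7 * b1^+2 * b2^+3 - 160 * a2^+7 * b1^+4 * b2 + 16 * a2^+8 * b2^+4 - 32 * a2^+8 * b1^+2 * b2^+2 + 16 * a2^+8 * b1^+4 + 64 * a1 * a2^+3 * b1 * b2^+7 + 128 * a1 * a2^+3 * b1^+3 * b2^+5 + 64 * a1 * a2^+3 * b1^+5 * b2^+3 - 64 * a1 * a2^+4 * b1 * b2^+6 + 32 * a1 * a2^+4 * b1^+3 * b2^+4 + 96 * a1 * a2^+4 * b1^+5 * b2^+2 - 320 * a1 * a2^+5 * b1^+3 * b2^+3 + 64 * a1 * a2^+5 * b1^+5 * b2 - 64 * a1 * a2^+6 * b1 * b2^+4 + 416 * a1 * a2^+6 * b1^+3 * b2^+2 - 32 * a1 * a2^+6 * b1^+5 + 64 * a1 * a2^+7 * b1 * b2^+3 - 64 * a1 * a2^+7 * b1^+3 * b2 -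 32 * a1^+2 * a2^+2 * b2^+8 + 96 * a1^+2 * a2^+2 * b1^+4 * b2^+4 + 64 * a1^+2 * a2^+2 * b1^+6 * b2^+2 - 32 * a1^+2 * a2^+3 * b2^+7 - 512 * a1^+2 * a2^+3 * b1^+2 * b2^+5 - 608 * a1^+2 * a2^+3 * b1^+4 * b2^+3 - 128 * a1^+2 * a2^+3 * b1^+6 * b2 + 192 * a1^+2 * a2^+4 * b2^+6 + 736 * a1^+2 * a2^+4 * b1^+2 * b2^+4 + 304 * a1^+2 * a2^+4 * b1^+4 * b2^+2 + 16 * a1^+2 * a2^+4 * b1^+6 - 160 * a1^+2 * a2^+5 * b2^+5 - 512 * a1^+2 * a2^+5 * b1^+2 * b2^+3 - 160 * a1^+2 * a2^+5 * b1^+4 * b2 + 32 * a1^+2 * a2^+6 * b2^+4 + 32 * a1^+2 * a2^+6 * b1^+4 - 64 * a1^+3 * a2 * b1 * b2^+7 - 128 * a1^+3 * a2 * b1^+3 * b2^+5 - 64 * a1^+3 * a2 * b1^+5 * b2^+3 + 416 * a1^+3 * a2^+2 * b1 * b2^+6 + 512 * a1^+3 * a2^+2 * b1^+3 * b2^+4 + 96 * a1^+3 * a2^+2 * b1^+5 * b2^+2 - 320 * a1^+3 * a2^+3 * b1 * b2^+5 - 384 * a1^+3 * a2^+3 * b1^+3 * b2^+3 + 192 * a1^+3 * a2^+3 * b1^+5 * b2 + 32 * a1^+3 * a2^+4 * b1 * b2^+4 + 512 * a1^+3 * a2^+4 * b1^+3 * b2^+2 - 32 * a1^+3 * a2^+4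 * b1^+5 + 128 * a1^+3 * a2^+5 * b1 * b2^+3 - 128 * a1^+3 * a2^+5 * b1^+3 * b2 + 16 * a1^+4 * b2^+8 + 32 * a1^+4 * b1^+2 * b2^+6 + 16 * a1^+4 * b1^+4 * b2^+4 - 160 * a1^+4 * a2 * b2^+7 - 160 * a1^+4 * a2 * b1^+2 * b2^+5 + 240 * a1^+4 * a2^+2 * b2^+6 + 304 * a1^+4 * a2^+2 * b1^+2 * b2^+4 - 320 * a1^+4 * a2^+2 * b1^+4 * b2^+2 - 160 * a1^+4 * a2^+3 * b2^+5 - 608 * a1^+4 * a2^+3 * b1^+2 * b2^+3 + 16 * a1^+4 * a2^+4 * b2^+4 + 96 * a1^+4 * a2^+4 * b1^+2 * b2^+2 + 16 * a1^+4 * a2^+4 * b1^+4 - 32 * a1^+5 * b1 * b2^+6 - 32 * a1^+5 * b1^+3 * b2^+4 + 64 * a1^+5 * a2 * b1 * b2^+5 + 192 * a1^+5 * a2 * b1^+3 * b2^+3 + 96 * a1^+5 * a2^+2 * b1 * b2^+4 + 96 * a1^+5 * a2^+2 * b1^+3 * b2^+2 + 64 * a1^+5 * a2^+3 * b1 * b2^+3 - 64 * a1^+5 * a2^+3 * b1^+3 * b2 + 16 * a1^+6 * b2^+6 + 16 * a1^+6 * b1^+2 * b2^+4 - 64 * a1^+6 * a2 * b2^+5 - 128 * a1^+6 * a2 * b1^+2 * b2^+3 + 64 * a1^+6 * a2^+2 * b1^+2 * b2^+2).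

Definition c311 {K : comNzRingType} (a1 a2 b1 b2 : K) : K :=
  (64 * a2^+5 * b1 * b2^+6 + 192 * a2^+5 * b1^+3 * b2^+4 + 192 * a2^+5 * b1^+5 * b2^+2 + 64 * a2^+5 * b1^+7 - 192 * a2^+6 * b1 * b2^+5 - 128 * a2^+6 * b1^+3 * b2^+3 - 320 * a2^+6 * b1^+5 * b2 + 192 * a2^+7 * b1 * b2^+4 - 128 * a2^+7 * b1^+3 * b2^+2 + 128 * a2^+7 * b1^+5 - 64 * a2^+8 * b1 * b2^+3 + 64 * a2^+8 * b1^+3 * b2 - 64 * a1 * a2^+3 * b2^+8 - 192 * a1 * a2^+3 * b1^+2 * b2^+6 - 192 * a1 * a2^+3 * b1^+4 * b2^+4 - 64 * a1 * a2^+3 * b1^+6 * b2^+2 + 192 * a1 * a2^+4 * b2^+7 + 256 * a1 * a2^+4 * b1^+2 * b2^+5 - 64 * a1 * a2^+4 * b1^+4 * b2^+3 - 128 * a1 * a2^+4 * b1^+6 * b2 - 192 * a1 * a2^+5 * b2^+6 - 640 * a1 * a2^+5 * b1^+2 * b2^+4 + 448 * a1 * a2^+5 * b1^+4 * b2^+2 - 128 * a1 * a2^+5 * b1^+6 + 64 * a1 * a2^+6 * b2^+5 + 704 * a1 * a2^+6 * b1^+2 * b2^+3 - 192 * a1 * a2^+6 * b1^+4 * b2 - 128 * a1 * a2^+7 * b1^+2 * b2^+2 - 128 * a1^+2 * a2^+2 * b1 * b2^+7 - 384 * a1^+2 * a2^+2 * b1^+3 * b2^+5 - 384 * a1^+2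 * a2^+2 * b1^+5 * b2^+3 - 128 * a1^+2 * a2^+2 * b1^+7 * b2 + 704 * a1^+2 * a2^+3 * b1 * b2^+6 + 1536 * a1^+2 * a2^+3 * b1^+3 * b2^+4 + 960 * a1^+2 * a2^+3 * b1^+5 * b2^+2 + 128 * a1^+2 * a2^+3 * b1^+7 - 640 * a1^+2 * a2^+4 * b1 * b2^+5 - 1280 * a1^+2 * a2^+4 * b1^+3 * b2^+3 - 256 * a1^+2 * a2^+4 * b1^+5 * b2 + 256 * a1^+2 * a2^+5 * b1 * b2^+4 - 64 * a1^+2 * a2^+5 * b1^+3 * b2^+2 + 256 * a1^+2 * a2^+5 * b1^+5 - 192 * a1^+2 * a2^+6 * b1 * b2^+3 + 192 * a1^+2 * a2^+6 * b1^+3 * b2 + 64 * a1^+3 * a2 * b2^+8 + 192 * a1^+3 * a2 * b1^+2 * b2^+6 + 192 * a1^+3 * a2 * b1^+4 * b2^+4 + 64 * a1^+3 * a2 * b1^+6 * b2^+2 - 128 * a1^+3 * a2^+2 * b2^+7 - 64 * a1^+3 * a2^+2 * b1^+2 * b2^+5 + 256 * a1^+3 * a2^+2 * b1^+4 * b2^+3 + 192 * a1^+3 * a2^+2 * b1^+6 * b2 - 128 * a1^+3 * a2^+3 * b2^+6 - 1280 * a1^+3 * a2^+3 * b1^+2 * b2^+4 - 384 * a1^+3 * a2^+3 * b1^+4 * b2^+2 - 256 * a1^+3 * a2^+3 * b1^+6 + 192 * a1^+3 * a2^+4 * b2^+5 + 1536 * a1^+3 * a2^+4 * b1^+2 * b2^+3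 - 384 * a1^+3 * a2^+4 * b1^+4 * b2 - 384 * a1^+3 * a2^+5 * b1^+2 * b2^+2 - 192 * a1^+4 * a2 * b1 * b2^+6 - 384 * a1^+4 * a2 * b1^+3 * b2^+4 - 192 * a1^+4 * a2 * b1^+5 * b2^+2 + 448 * a1^+4 * a2^+2 * b1 * b2^+5 - 384 * a1^+4 * a2^+2 * b1^+3 * b2^+3 + 64 * a1^+4 * a2^+2 * b1^+5 * b2 - 64 * a1^+4 * a2^+3 * b1 * b2^+4 + 256 * a1^+4 * a2^+3 * b1^+3 * b2^+2 + 128 * a1^+4 * a2^+3 * b1^+5 - 192 * a1^+4 * a2^+4 * b1 * b2^+3 + 192 * a1^+4 * a2^+4 * b1^+3 * b2 + 128 * a1^+5 * b2^+7 + 256 * a1^+5 * b1^+2 * b2^+5 + 128 * a1^+5 * b1^+4 * b2^+3 - 320 * a1^+5 * a2 * b2^+6 - 256 * a1^+5 * a2 * b1^+2 * b2^+4 + 64 * a1^+5 * a2 * b1^+4 * b2^+2 + 192 * a1^+5 * a2^+2 * b2^+5 + 960 * a1^+5 * a2^+2 * b1^+2 * b2^+3 - 192 * a1^+5 * a2^+2 * b1^+4 * b2 - 384 * a1^+5 * a2^+3 * b1^+2 * b2^+2 - 128 * a1^+6 * b1 * b2^+5 - 256 * a1^+6 * b1^+3 * b2^+3 - 128 * a1^+6 * a2 * b1 * b2^+4 + 192 * a1^+6 * a2 * b1^+3 * b2^+2 - 64 * a1^+6 * a2^+2 * b1 * b2^+3 + 64 * a1^+6 * a2^+2 * b1^+3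 * b2 + 64 * a1^+7 * b2^+5 + 128 * a1^+7 * b1^+2 * b2^+3 - 128 * a1^+7 * a2 * b1^+2 * b2^+2).

Definition c221 {K : comNzRingType} (a1 a2 b1 b2 : K) : K :=
  (- 32 * a2^+4 * b1^+2 * b2^+6 - 64 * a2^+4 * b1^+4 * b2^+4 - 32 * a2^+4 * b1^+6 * b2^+2 - 96 * a2^+5 * b1^+2 * b2^+5 - 256 * a2^+5 * b1^+4 * b2^+3 - 160 * a2^+5 * b1^+6 * b2 + 352 * a2^+6 * b1^+2 * b2^+4 + 96 * a2^+6 * b1^+4 * b2^+2 + 128 * a2^+6 * b1^+6 - 288 * a2^+7 * b1^+2 * b2^+3 + 32 * a2^+7 * b1^+4 * b2 + 64 * a2^+8 * b1^+2 * b2^+2 + 64 * a1 * a2^+3 * b1 * b2^+7 + 64 * a1 * a2^+3 * b1^+3 * b2^+5 - 64 * a1 * a2^+3 * b1^+5 * b2^+3 - 64 * a1 * a2^+3 * b1^+7 * b2 + 352 * a1 * a2^+4 * b1^+3 * b2^+4 + 384 * a1 * a2^+4 * b1^+5 * b2^+2 + 32 * a1 * a2^+4 * b1^+7 - 128 * a1 * a2^+5 * b1 * b2^+5 + 640 * a1 * a2^+5 * b1^+3 * b2^+3 - 224 * a1 * a2^+6 * b1^+3 * b2^+2 - 160 * a1 * a2^+6 * b1^+5 + 64 * a1 * a2^+7 * b1 * b2^+3 - 64 * a1 * a2^+7 * b1^+3 * b2 + 64 * a1^+2 * a2^+2 * b2^+8 + 448 * a1^+2 * a2^+2 * b1^+2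 * b2^+6 + 768 * a1^+2 * a2^+2 * b1^+4 * b2^+4 + 448 * a1^+2 * a2^+2 * b1^+6 * b2^+2 + 64 * a1^+2 * a2^+2 * b1^+8 - 288 * a1^+2 * a2^+3 * b2^+7 - 1440 * a1^+2 * a2^+3 * b1^+2 * b2^+5 - 1376 * a1^+2 * a2^+3 * b1^+4 * b2^+3 - 224 * a1^+2 * a2^+3 * b1^+6 * b2 + 352 * a1^+2 * a2^+4 * b2^+6 + 832 * a1^+2 * a2^+4 * b1^+2 * b2^+4 + 192 * a1^+2 * a2^+4 * b1^+4 * b2^+2 + 96 * a1^+2 * a2^+4 * b1^+6 - 96 * a1^+2 * a2^+5 * b2^+5 - 1440 * a1^+2 * a2^+5 * b1^+2 * b2^+3 + 384 * a1^+2 * a2^+5 * b1^+4 * b2 - 32 * a1^+2 * a2^+6 * b2^+4 + 448 * a1^+2 * a2^+6 * b1^+2 * b2^+2 - 32 * a1^+2 * a2^+6 * b1^+4 - 64 * a1^+3 * a2 * b1 * b2^+7 - 64 * a1^+3 * a2 * b1^+3 * b2^+5 + 64 * a1^+3 * a2 * b1^+5 * b2^+3 + 64 * a1^+3 * a2 * b1^+7 * b2 - 224 * a1^+3 * a2^+2 * b1 * b2^+6 - 1376 * a1^+3 * a2^+2 * b1^+3 * b2^+4 - 1440 * a1^+3 * a2^+2 * b1^+5 * b2^+2 - 288 * a1^+3 * a2^+2 * b1^+7 + 640 * a1^+3 * a2^+3 * b1 * b2^+5 + 2816 * a1^+3 * a2^+3 * b1^+3 * b2^+3 + 640 * a1^+3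 * a2^+3 * b1^+5 * b2 + 352 * a1^+3 * a2^+4 * b1 * b2^+4 - 1376 * a1^+3 * a2^+4 * b1^+3 * b2^+2 - 256 * a1^+3 * a2^+4 * b1^+5 + 64 * a1^+3 * a2^+5 * b1 * b2^+3 - 64 * a1^+3 * a2^+5 * b1^+3 * b2 - 32 * a1^+4 * b1^+2 * b2^+6 - 64 * a1^+4 * b1^+4 * b2^+4 - 32 * a1^+4 * b1^+6 * b2^+2 + 32 * a1^+4 * a2 * b2^+7 + 384 * a1^+4 * a2 * b1^+2 * b2^+5 + 352 * a1^+4 * a2 * b1^+4 * b2^+3 + 96 * a1^+4 * a2^+2 * b2^+6 + 192 * a1^+4 * a2^+2 * b1^+2 * b2^+4 + 832 * a1^+4 * a2^+2 * b1^+4 * b2^+2 + 352 * a1^+4 * a2^+2 * b1^+6 - 256 * a1^+4 * a2^+3 * b2^+5 - 1376 * a1^+4 * a2^+3 * b1^+2 * b2^+3 + 352 * a1^+4 * a2^+3 * b1^+4 * b2 - 64 * a1^+4 * a2^+4 * b2^+4 + 768 * a1^+4 * a2^+4 * b1^+2 * b2^+2 - 64 * a1^+4 * a2^+4 * b1^+4 - 160 * a1^+5 * b1 * b2^+6 - 256 * a1^+5 * b1^+3 * b2^+4 - 96 * a1^+5 * b1^+5 * b2^+2 + 640 * a1^+5 * a2 * b1^+3 * b2^+3 - 128 * a1^+5 * a2 * b1^+5 * b2 + 384 * a1^+5 * a2^+2 * b1 * b2^+4 - 1440 * a1^+5 * a2^+2 * b1^+3 * b2^+2 - 96 * a1^+5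 * a2^+2 * b1^+5 - 64 * a1^+5 * a2^+3 * b1 * b2^+3 + 64 * a1^+5 * a2^+3 * b1^+3 * b2 + 128 * a1^+6 * b2^+6 + 96 * a1^+6 * b1^+2 * b2^+4 + 352 * a1^+6 * b1^+4 * b2^+2 - 160 * a1^+6 * a2 * b2^+5 - 224 * a1^+6 * a2 * b1^+2 * b2^+3 - 32 * a1^+6 * a2^+2 * b2^+4 + 448 * a1^+6 * a2^+2 * b1^+2 * b2^+2 - 32 * a1^+6 * a2^+2 * b1^+4 + 32 * a1^+7 * b1 * b2^+4 - 288 * a1^+7 * b1^+3 * b2^+2 - 64 * a1^+7 * a2 * b1 * b2^+3 + 64 * a1^+7 * a2 * b1^+3 * b2 + 64 * a1^+8 * b1^+2 * b2^+2).

Definition c131 {K : comNzRingType} (a1 a2 b1 b2 : K) : K :=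
  (128 * a2^+5 * b1^+3 * b2^+4 + 256 * a2^+5 * b1^+5 * b2^+2 + 128 * a2^+5 * b1^+7 - 256 * a2^+6 * b1^+3 * b2^+3 - 128 * a2^+6 * b1^+5 * b2 + 128 * a2^+7 * b1^+3 * b2^+2 + 64 * a2^+7 * b1^+5 + 64 * a1 * a2^+3 * b1^+2 * b2^+6 + 192 * a1 * a2^+3 * b1^+4 * b2^+4 + 192 * a1 * a2^+3 * b1^+6 * b2^+2 + 64 * a1 * a2^+3 * b1^+8 - 192 * a1 * a2^+4 * b1^+2 * b2^+5 - 384 * a1 * a2^+4 * b1^+4 * b2^+3 - 192 * a1 * a2^+4 * b1^+6 * b2 + 64 * a1 * a2^+5 * b1^+2 * b2^+4 - 256 * a1 * a2^+5 * b1^+4 * b2^+2 - 320 * a1 * a2^+5 * b1^+6 + 192 * a1 * a2^+6 * b1^+2 * b2^+3 - 128 * a1 * a2^+6 * b1^+4 * b2 - 128 * a1 * a2^+7 * b1^+2 * b2^+2 - 128 * a1^+2 * a2^+2 * b1 * b2^+7 - 384 * a1^+2 * a2^+2 * b1^+3 * b2^+5 - 384 * a1^+2 * a2^+2 * b1^+5 * b2^+3 - 128 * a1^+2 * a2^+2 * b1^+7 * b2 + 192 * a1^+2 * a2^+3 * b1 * b2^+6 + 256 * a1^+2 * a2^+3 * b1^+3 * b2^+4 - 64 * a1^+2 * a2^+3 * b1^+5 * b2^+2 - 128 * a1^+2 * a2^+3 * b1^+7 + 64 * a1^+2 * a2^+4 * b1 * b2^+5 - 384 * a1^+2 * a2^+4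 * b1^+3 * b2^+3 + 448 * a1^+2 * a2^+4 * b1^+5 * b2 - 192 * a1^+2 * a2^+5 * b1 * b2^+4 + 960 * a1^+2 * a2^+5 * b1^+3 * b2^+2 + 192 * a1^+2 * a2^+5 * b1^+5 + 64 * a1^+2 * a2^+6 * b1 * b2^+3 - 64 * a1^+2 * a2^+6 * b1^+3 * b2 - 64 * a1^+3 * a2 * b1^+2 * b2^+6 - 192 * a1^+3 * a2 * b1^+4 * b2^+4 - 192 * a1^+3 * a2 * b1^+6 * b2^+2 - 64 * a1^+3 * a2 * b1^+8 + 128 * a1^+3 * a2^+2 * b2^+7 + 960 * a1^+3 * a2^+2 * b1^+2 * b2^+5 + 1536 * a1^+3 * a2^+2 * b1^+4 * b2^+3 + 704 * a1^+3 * a2^+2 * b1^+6 * b2 - 256 * a1^+3 * a2^+3 * b2^+6 - 384 * a1^+3 * a2^+3 * b1^+2 * b2^+4 - 1280 * a1^+3 * a2^+3 * b1^+4 * b2^+2 - 128 * a1^+3 * a2^+3 * b1^+6 + 128 * a1^+3 * a2^+4 * b2^+5 + 256 * a1^+3 * a2^+4 * b1^+2 * b2^+3 - 64 * a1^+3 * a2^+4 * b1^+4 * b2 - 384 * a1^+3 * a2^+5 * b1^+2 * b2^+2 - 128 * a1^+4 * a2 * b1 * b2^+6 - 64 * a1^+4 * a2 * b1^+3 * b2^+4 + 256 * a1^+4 * a2 * b1^+5 * b2^+2 + 192 * a1^+4 * a2 * b1^+7 - 256 * a1^+4 * a2^+2 * b1 * b2^+5 - 1280 * a1^+4 * a2^+2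 * b1^+3 * b2^+3 - 640 * a1^+4 * a2^+2 * b1^+5 * b2 - 384 * a1^+4 * a2^+3 * b1 * b2^+4 + 1536 * a1^+4 * a2^+3 * b1^+3 * b2^+2 + 192 * a1^+4 * a2^+3 * b1^+5 + 192 * a1^+4 * a2^+4 * b1 * b2^+3 - 192 * a1^+4 * a2^+4 * b1^+3 * b2 + 64 * a1^+5 * b2^+7 + 192 * a1^+5 * b1^+2 * b2^+5 + 192 * a1^+5 * b1^+4 * b2^+3 + 64 * a1^+5 * b1^+6 * b2 - 128 * a1^+5 * a2 * b2^+6 + 448 * a1^+5 * a2 * b1^+2 * b2^+4 - 640 * a1^+5 * a2 * b1^+4 * b2^+2 - 192 * a1^+5 * a2 * b1^+6 + 256 * a1^+5 * a2^+2 * b2^+5 - 64 * a1^+5 * a2^+2 * b1^+2 * b2^+3 + 256 * a1^+5 * a2^+2 * b1^+4 * b2 - 384 * a1^+5 * a2^+3 * b1^+2 * b2^+2 - 320 * a1^+6 * b1 * b2^+5 - 128 * a1^+6 * b1^+3 * b2^+3 - 192 * a1^+6 * b1^+5 * b2 - 192 * a1^+6 * a2 * b1 * b2^+4 + 704 * a1^+6 * a2 * b1^+3 * b2^+2 + 64 * a1^+6 * a2 * b1^+5 + 192 * a1^+6 * a2^+2 * b1 * b2^+3 - 192 * a1^+6 * a2^+2 * b1^+3 * b2 + 128 * a1^+7 * b2^+5 - 128 * a1^+7 * b1^+2 * b2^+3 + 192 * a1^+7 * b1^+4 * b2 - 128 * a1^+7 * a2 * b1^+2 * b2^+2 + 64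 * a1^+8 * b1 * b2^+3 - 64 * a1^+8 * b1^+3 * b2).

Definition c041 {K : comNzRingType} (a1 a2 b1 b2 : K) : K :=
  (16 * a2^+4 * b1^+4 * b2^+4 + 32 * a2^+4 * b1^+6 * b2^+2 + 16 * a2^+4 * b1^+8 - 32 * a2^+5 * b1^+4 * b2^+3 - 32 * a2^+5 * b1^+6 * b2 + 16 * a2^+6 * b1^+4 * b2^+2 + 16 * a2^+6 * b1^+6 - 64 * a1 * a2^+3 * b1^+3 * b2^+5 - 128 * a1 * a2^+3 * b1^+5 * b2^+3 - 64 * a1 * a2^+3 * b1^+7 * b2 - 160 * a1 * a2^+4 * b1^+5 * b2^+2 - 160 * a1 * a2^+4 * b1^+7 + 192 * a1 * a2^+5 * b1^+3 * b2^+3 + 64 * a1 * a2^+5 * b1^+5 * b2 - 128 * a1 * a2^+6 * b1^+3 * b2^+2 - 64 * a1 * a2^+6 * b1^+5 + 64 * a1^+2 * a2^+2 * b1^+2 * b2^+6 + 96 * a1^+2 * a2^+2 * b1^+4 * b2^+4 - 32 * a1^+2 * a2^+2 * b1^+8 + 96 * a1^+2 * a2^+3 * b1^+2 * b2^+5 + 512 * a1^+2 * a2^+3 * b1^+4 * b2^+3 + 416 * a1^+2 * a2^+3 * b1^+6 * b2 - 320 * a1^+2 * a2^+4 * b1^+2 * b2^+4 + 304 * a1^+2 * a2^+4 * b1^+4 * b2^+2 + 240 * a1^+2 * a2^+4 * b1^+6 + 96 * a1^+2 * a2^+5 * b1^+2 * b2^+3 + 96 * a1^+2 * a2^+5 *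 b1^+4 * b2 + 64 * a1^+2 * a2^+6 * b1^+2 * b2^+2 + 64 * a1^+3 * a2 * b1^+3 * b2^+5 + 128 * a1^+3 * a2 * b1^+5 * b2^+3 + 64 * a1^+3 * a2 * b1^+7 * b2 - 128 * a1^+3 * a2^+2 * b1 * b2^+6 - 608 * a1^+3 * a2^+2 * b1^+3 * b2^+4 - 512 * a1^+3 * a2^+2 * b1^+5 * b2^+2 - 32 * a1^+3 * a2^+2 * b1^+7 + 192 * a1^+3 * a2^+3 * b1 * b2^+5 - 384 * a1^+3 * a2^+3 * b1^+3 * b2^+3 - 320 * a1^+3 * a2^+3 * b1^+5 * b2 - 608 * a1^+3 * a2^+4 * b1^+3 * b2^+2 - 160 * a1^+3 * a2^+4 * b1^+5 - 64 * a1^+3 * a2^+5 * b1 * b2^+3 + 64 * a1^+3 * a2^+5 * b1^+3 * b2 + 16 * a1^+4 * b1^+4 * b2^+4 + 32 * a1^+4 * b1^+6 * b2^+2 + 16 * a1^+4 * b1^+8 + 96 * a1^+4 * a2 * b1^+2 * b2^+5 + 32 * a1^+4 * a2 * b1^+4 * b2^+3 - 64 * a1^+4 * a2 * b1^+6 * b2 + 16 * a1^+4 * a2^+2 * b2^+6 + 304 * a1^+4 * a2^+2 * b1^+2 * b2^+4 + 736 * a1^+4 * a2^+2 * b1^+4 * b2^+2 + 192 * a1^+4 * a2^+2 * b1^+6 - 32 * a1^+4 * a2^+3 * b2^+5 + 512 * a1^+4 * a2^+3 * b1^+2 * b2^+3 + 32 * a1^+4 * a2^+3 * b1^+4 * b2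 + 16 * a1^+4 * a2^+4 * b2^+4 + 96 * a1^+4 * a2^+4 * b1^+2 * b2^+2 + 16 * a1^+4 * a2^+4 * b1^+4 - 64 * a1^+5 * b1 * b2^+6 - 160 * a1^+5 * b1^+3 * b2^+4 - 160 * a1^+5 * b1^+5 * b2^+2 - 64 * a1^+5 * b1^+7 + 64 * a1^+5 * a2 * b1 * b2^+5 - 320 * a1^+5 * a2 * b1^+3 * b2^+3 - 160 * a1^+5 * a2^+2 * b1 * b2^+4 - 512 * a1^+5 * a2^+2 * b1^+3 * b2^+2 - 160 * a1^+5 * a2^+2 * b1^+5 - 128 * a1^+5 * a2^+3 * b1 * b2^+3 + 128 * a1^+5 * a2^+3 * b1^+3 * b2 + 16 * a1^+6 * b2^+6 + 240 * a1^+6 * b1^+2 * b2^+4 + 192 * a1^+6 * b1^+4 * b2^+2 + 96 * a1^+6 * b1^+6 - 32 * a1^+6 * a2 * b2^+5 + 416 * a1^+6 * a2 * b1^+2 * b2^+3 - 64 * a1^+6 * a2 * b1^+4 * b2 + 32 * a1^+6 * a2^+2 * b2^+4 + 32 * a1^+6 * a2^+2 * b1^+4 - 160 * a1^+7 * b1 * b2^+4 - 32 * a1^+7 * b1^+3 * b2^+2 - 64 * a1^+7 * b1^+5 - 64 * a1^+7 * a2 * b1 * b2^+3 + 64 * a1^+7 * a2 * b1^+3 * b2 + 16 * a1^+8 * b2^+4 - 32 * a1^+8 * b1^+2 * b2^+2 + 16 * a1^+8 * b1^+4).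

Definition c302 {K : comNzRingType} (a1 a2 b1 b2 : K) : K :=
  (- 96 * a2^+6 * b1^+3 * b2^+4 - 80 * a2^+6 * b1^+5 * b2^+2 - 16 * a2^+6 * b1^+7 + 64 * a2^+7 * b1^+3 * b2^+3 + 144 * a2^+7 * b1^+5 * b2 + 32 * a2^+8 * b1^+3 * b2^+2 - 32 * a2^+8 * b1^+5 + 32 * a1 * a2^+4 * b1^+2 * b2^+6 + 64 * a1 * a2^+4 * b1^+4 * b2^+4 + 32 * a1 * a2^+4 * b1^+6 * b2^+2 + 256 * a1 * a2^+5 * b1^+2 * b2^+5 + 144 * a1 * a2^+5 * b1^+4 * b2^+3 + 80 * a1 * a2^+5 * b1^+6 * b2 - 224 * a1 * a2^+6 * b1^+2 * b2^+4 - 432 * a1 * a2^+6 * b1^+4 * b2^+2 + 32 * a1 * a2^+6 * b1^+6 - 64 * a1 * a2^+7 * b1^+2 * b2^+3 + 128 * a1 * a2^+7 * b1^+4 * b2 - 64 * a1^+2 * a2^+3 * b1 * b2^+7 - 64 * a1^+2 * a2^+3 * b1^+3 * b2^+5 + 64 * a1^+2 * a2^+3 * b1^+5 * b2^+3 + 64 * a1^+2 * a2^+3 * b1^+7 * b2 - 224 * a1^+2 * a2^+4 * b1 * b2^+6 - 192 * a1^+2 * a2^+4 * b1^+3 * b2^+4 - 480 * a1^+2 * a2^+4 * b1^+5 * b2^+2 - 32 * a1^+2 * a2^+4 * b1^+7 + 256 * a1^+2 * a2^+5 * b1 * b2^+5 + 416 * a1^+2 * a2^+5 * b1^+3 * b2^+3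 + 144 * a1^+2 * a2^+5 * b1^+5 * b2 + 32 * a1^+2 * a2^+6 * b1 * b2^+4 - 96 * a1^+2 * a2^+6 * b1^+3 * b2^+2 - 64 * a1^+2 * a2^+6 * b1^+5 + 32 * a1^+3 * a2^+2 * b2^+8 - 96 * a1^+3 * a2^+2 * b1^+2 * b2^+6 - 288 * a1^+3 * a2^+2 * b1^+4 * b2^+4 - 160 * a1^+3 * a2^+2 * b1^+6 * b2^+2 + 64 * a1^+3 * a2^+3 * b2^+7 + 416 * a1^+3 * a2^+3 * b1^+2 * b2^+5 + 992 * a1^+3 * a2^+3 * b1^+4 * b2^+3 - 96 * a1^+3 * a2^+4 * b2^+6 - 192 * a1^+3 * a2^+4 * b1^+2 * b2^+4 - 752 * a1^+3 * a2^+4 * b1^+4 * b2^+2 + 64 * a1^+3 * a2^+4 * b1^+6 - 64 * a1^+3 * a2^+5 * b1^+2 * b2^+3 + 256 * a1^+3 * a2^+5 * b1^+4 * b2 + 128 * a1^+4 * a2 * b1 * b2^+7 + 256 * a1^+4 * a2 * b1^+3 * b2^+5 + 128 * a1^+4 * a2 * b1^+5 * b2^+3 - 432 * a1^+4 * a2^+2 * b1 * b2^+6 - 752 * a1^+4 * a2^+2 * b1^+3 * b2^+4 + 160 * a1^+4 * a2^+2 * b1^+5 * b2^+2 + 144 * a1^+4 * a2^+3 * b1 * b2^+5 + 992 * a1^+4 * a2^+3 * b1^+3 * b2^+3 - 192 * a1^+4 * a2^+3 * b1^+5 * b2 + 64 * a1^+4 * a2^+4 * b1 * b2^+4 - 288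 * a1^+4 * a2^+4 * b1^+3 * b2^+2 - 32 * a1^+4 * a2^+4 * b1^+5 - 32 * a1^+5 * b2^+8 - 64 * a1^+5 * b1^+2 * b2^+6 - 32 * a1^+5 * b1^+4 * b2^+4 + 144 * a1^+5 * a2 * b2^+7 + 144 * a1^+5 * a2 * b1^+2 * b2^+5 - 192 * a1^+5 * a2 * b1^+4 * b2^+3 - 80 * a1^+5 * a2^+2 * b2^+6 - 480 * a1^+5 * a2^+2 * b1^+2 * b2^+4 + 160 * a1^+5 * a2^+2 * b1^+4 * b2^+2 + 64 * a1^+5 * a2^+3 * b1^+2 * b2^+3 + 128 * a1^+5 * a2^+3 * b1^+4 * b2 + 32 * a1^+6 * b1 * b2^+6 + 64 * a1^+6 * b1^+3 * b2^+4 + 80 * a1^+6 * a2 * b1 * b2^+5 + 32 * a1^+6 * a2^+2 * b1 * b2^+4 - 160 * a1^+6 * a2^+2 * b1^+3 * b2^+2 - 16 * a1^+7 * b2^+6 - 32 * a1^+7 * b1^+2 * b2^+4 + 64 * a1^+7 * a2 * b1^+2 * b2^+3).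

Definition c212 {K : comNzRingType} (a1 a2 b1 b2 : K) : K :=
  (32 * a2^+5 * b1^+2 * b2^+6 + 64 * a2^+5 * b1^+4 * b2^+4 + 32 * a2^+5 * b1^+6 * b2^+2 - 32 * a2^+6 * b1^+2 * b2^+5 + 128 * a2^+6 * b1^+4 * b2^+3 + 128 * a2^+6 * b1^+6 * b2 - 32 * a2^+7 * b1^+2 * b2^+4 + 96 * a2^+7 * b1^+4 * b2^+2 - 112 * a2^+7 * b1^+6 + 32 * a2^+8 * b1^+2 * b2^+3 - 96 * a2^+8 * b1^+4 * b2 - 64 * a1 * a2^+4 * b1 * b2^+7 - 64 * a1 * a2^+4 * b1^+3 * b2^+5 + 64 * a1 * a2^+4 * b1^+5 * b2^+3 + 64 * a1 * a2^+4 * b1^+7 * b2 + 64 * a1 * a2^+5 * b1 * b2^+6 - 512 * a1 * a2^+5 * b1^+3 * b2^+4 - 432 * a1 * a2^+5 * b1^+5 * b2^+2 - 48 * a1 * a2^+5 * b1^+7 + 64 * a1 * a2^+6 * b1 * b2^+5 - 448 * a1 * a2^+6 * b1^+3 * b2^+3 + 336 * a1 * a2^+6 * b1^+5 * b2 - 64 * a1 * a2^+7 * b1 * b2^+4 + 256 * a1 * a2^+7 * b1^+3 * b2^+2 + 32 * a1^+2 * a2^+3 * b2^+8 - 160 * a1^+2 * a2^+3 * b1^+2 * b2^+6 - 480 * a1^+2 * a2^+3 * b1^+4 * b2^+4 - 352 * a1^+2 * a2^+3 * b1^+6 * b2^+2 - 64 * a1^+2 * a2^+3 * b1^+8 - 32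 * a1^+2 * a2^+4 * b2^+7 + 736 * a1^+2 * a2^+4 * b1^+2 * b2^+5 + 624 * a1^+2 * a2^+4 * b1^+4 * b2^+3 + 336 * a1^+2 * a2^+4 * b1^+6 * b2 - 32 * a1^+2 * a2^+5 * b2^+6 + 736 * a1^+2 * a2^+5 * b1^+2 * b2^+4 - 192 * a1^+2 * a2^+5 * b1^+4 * b2^+2 - 144 * a1^+2 * a2^+5 * b1^+6 + 32 * a1^+2 * a2^+6 * b2^+5 - 160 * a1^+2 * a2^+6 * b1^+2 * b2^+3 - 256 * a1^+2 * a2^+6 * b1^+4 * b2 + 256 * a1^+3 * a2^+2 * b1 * b2^+7 + 640 * a1^+3 * a2^+2 * b1^+3 * b2^+5 + 512 * a1^+3 * a2^+2 * b1^+5 * b2^+3 + 128 * a1^+3 * a2^+2 * b1^+7 * b2 - 448 * a1^+3 * a2^+3 * b1 * b2^+6 - 352 * a1^+3 * a2^+3 * b1^+3 * b2^+4 - 416 * a1^+3 * a2^+3 * b1^+5 * b2^+2 + 128 * a1^+3 * a2^+3 * b1^+7 - 512 * a1^+3 * a2^+4 * b1 * b2^+5 - 352 * a1^+3 * a2^+4 * b1^+3 * b2^+3 + 400 * a1^+3 * a2^+4 * b1^+5 * b2 - 64 * a1^+3 * a2^+5 * b1 * b2^+4 + 640 * a1^+3 * a2^+5 * b1^+3 * b2^+2 - 96 * a1^+4 * a2 * b2^+8 - 256 * a1^+4 * a2 * b1^+2 * b2^+6 - 224 * a1^+4 * a2 * b1^+4 * b2^+4 - 64 * a1^+4 * a2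 * b1^+6 * b2^+2 + 96 * a1^+4 * a2^+2 * b2^+7 - 192 * a1^+4 * a2^+2 * b1^+2 * b2^+5 - 128 * a1^+4 * a2^+2 * b1^+4 * b2^+3 - 320 * a1^+4 * a2^+2 * b1^+6 * b2 + 128 * a1^+4 * a2^+3 * b2^+6 + 624 * a1^+4 * a2^+3 * b1^+2 * b2^+4 - 128 * a1^+4 * a2^+3 * b1^+4 * b2^+2 - 64 * a1^+4 * a2^+3 * b1^+6 + 64 * a1^+4 * a2^+4 * b2^+5 - 480 * a1^+4 * a2^+4 * b1^+2 * b2^+3 - 224 * a1^+4 * a2^+4 * b1^+4 * b2 + 336 * a1^+5 * a2 * b1 * b2^+6 + 400 * a1^+5 * a2 * b1^+3 * b2^+4 + 256 * a1^+5 * a2 * b1^+5 * b2^+2 - 432 * a1^+5 * a2^+2 * b1 * b2^+5 - 416 * a1^+5 * a2^+2 * b1^+3 * b2^+3 + 256 * a1^+5 * a2^+2 * b1^+5 * b2 + 64 * a1^+5 * a2^+3 * b1 * b2^+4 + 512 * a1^+5 * a2^+3 * b1^+3 * b2^+2 - 112 * a1^+6 * b2^+7 - 144 * a1^+6 * b1^+2 * b2^+5 - 64 * a1^+6 * b1^+4 * b2^+3 + 128 * a1^+6 * a2 * b2^+6 + 336 * a1^+6 * a2 * b1^+2 * b2^+4 - 320 * a1^+6 * a2 * b1^+4 * b2^+2 + 32 * a1^+6 * a2^+2 * b2^+5 - 352 * a1^+6 * a2^+2 * b1^+2 * b2^+3 - 64 * a1^+6 * a2^+2 * b1^+4 * b2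 - 48 * a1^+7 * b1 * b2^+5 + 128 * a1^+7 * b1^+3 * b2^+3 + 64 * a1^+7 * a2 * b1 * b2^+4 + 128 * a1^+7 * a2 * b1^+3 * b2^+2 - 64 * a1^+8 * b1^+2 * b2^+3).

Definition c122 {K : comNzRingType} (a1 a2 b1 b2 : K) : K :=
  (- 64 * a2^+6 * b1^+3 * b2^+4 - 144 * a2^+6 * b1^+5 * b2^+2 - 112 * a2^+6 * b1^+7 + 128 * a2^+7 * b1^+3 * b2^+3 - 48 * a2^+7 * b1^+5 * b2 - 64 * a2^+8 * b1^+3 * b2^+2 - 64 * a1 * a2^+4 * b1^+2 * b2^+6 - 224 * a1 * a2^+4 * b1^+4 * b2^+4 - 256 * a1 * a2^+4 * b1^+6 * b2^+2 - 96 * a1 * a2^+4 * b1^+8 + 256 * a1 * a2^+5 * b1^+2 * b2^+5 + 400 * a1 * a2^+5 * b1^+4 * b2^+3 + 336 * a1 * a2^+5 * b1^+6 * b2 - 320 * a1 * a2^+6 * b1^+2 * b2^+4 + 336 * a1 * a2^+6 * b1^+4 * b2^+2 + 128 * a1 * a2^+6 * b1^+6 + 128 * a1 * a2^+7 * b1^+2 * b2^+3 + 64 * a1 * a2^+7 * b1^+4 * b2 + 128 * a1^+2 * a2^+3 * b1 * b2^+7 + 512 * a1^+2 * a2^+3 * b1^+3 * b2^+5 + 640 * a1^+2 * a2^+3 * b1^+5 * b2^+3 + 256 * a1^+2 * a2^+3 * b1^+7 * b2 - 320 * a1^+2 * a2^+4 * b1 * b2^+6 - 128 * a1^+2 * a2^+4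 * b1^+3 * b2^+4 - 192 * a1^+2 * a2^+4 * b1^+5 * b2^+2 + 96 * a1^+2 * a2^+4 * b1^+7 + 256 * a1^+2 * a2^+5 * b1 * b2^+5 - 416 * a1^+2 * a2^+5 * b1^+3 * b2^+3 - 432 * a1^+2 * a2^+5 * b1^+5 * b2 - 64 * a1^+2 * a2^+6 * b1 * b2^+4 - 352 * a1^+2 * a2^+6 * b1^+3 * b2^+2 + 32 * a1^+2 * a2^+6 * b1^+5 - 64 * a1^+3 * a2^+2 * b2^+8 - 352 * a1^+3 * a2^+2 * b1^+2 * b2^+6 - 480 * a1^+3 * a2^+2 * b1^+4 * b2^+4 - 160 * a1^+3 * a2^+2 * b1^+6 * b2^+2 + 32 * a1^+3 * a2^+2 * b1^+8 + 128 * a1^+3 * a2^+3 * b2^+7 - 416 * a1^+3 * a2^+3 * b1^+2 * b2^+5 - 352 * a1^+3 * a2^+3 * b1^+4 * b2^+3 - 448 * a1^+3 * a2^+3 * b1^+6 * b2 - 64 * a1^+3 * a2^+4 * b2^+6 - 128 * a1^+3 * a2^+4 * b1^+2 * b2^+4 + 624 * a1^+3 * a2^+4 * b1^+4 * b2^+2 + 128 * a1^+3 * a2^+4 * b1^+6 + 512 * a1^+3 * a2^+5 * b1^+2 * b2^+3 + 64 * a1^+3 * a2^+5 * b1^+4 * b2 + 64 * a1^+4 * a2 * b1 * b2^+7 + 64 * a1^+4 * a2 * b1^+3 * b2^+5 - 64 * a1^+4 * a2 * b1^+5 * b2^+3 - 64 * a1^+4 * a2 * b1^+7 * b2 + 336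 * a1^+4 * a2^+2 * b1 * b2^+6 + 624 * a1^+4 * a2^+2 * b1^+3 * b2^+4 + 736 * a1^+4 * a2^+2 * b1^+5 * b2^+2 - 32 * a1^+4 * a2^+2 * b1^+7 + 400 * a1^+4 * a2^+3 * b1 * b2^+5 - 352 * a1^+4 * a2^+3 * b1^+3 * b2^+3 - 512 * a1^+4 * a2^+3 * b1^+5 * b2 - 224 * a1^+4 * a2^+4 * b1 * b2^+4 - 480 * a1^+4 * a2^+4 * b1^+3 * b2^+2 + 64 * a1^+4 * a2^+4 * b1^+5 + 32 * a1^+5 * b1^+2 * b2^+6 + 64 * a1^+5 * b1^+4 * b2^+4 + 32 * a1^+5 * b1^+6 * b2^+2 - 48 * a1^+5 * a2 * b2^+7 - 432 * a1^+5 * a2 * b1^+2 * b2^+5 - 512 * a1^+5 * a2 * b1^+4 * b2^+3 + 64 * a1^+5 * a2 * b1^+6 * b2 - 144 * a1^+5 * a2^+2 * b2^+6 - 192 * a1^+5 * a2^+2 * b1^+2 * b2^+4 + 736 * a1^+5 * a2^+2 * b1^+4 * b2^+2 - 32 * a1^+5 * a2^+2 * b1^+6 + 640 * a1^+5 * a2^+3 * b1^+2 * b2^+3 - 64 * a1^+5 * a2^+3 * b1^+4 * b2 + 128 * a1^+6 * b1 * b2^+6 + 128 * a1^+6 * b1^+3 * b2^+4 - 32 * a1^+6 * b1^+5 * b2^+2 + 336 * a1^+6 * a2 * b1 * b2^+5 - 448 * a1^+6 * a2 * b1^+3 * b2^+3 + 64 * a1^+6 * a2 * b1^+5 * b2 -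 256 * a1^+6 * a2^+2 * b1 * b2^+4 - 160 * a1^+6 * a2^+2 * b1^+3 * b2^+2 + 32 * a1^+6 * a2^+2 * b1^+5 - 112 * a1^+7 * b2^+6 + 96 * a1^+7 * b1^+2 * b2^+4 - 32 * a1^+7 * b1^+4 * b2^+2 + 256 * a1^+7 * a2 * b1^+2 * b2^+3 - 64 * a1^+7 * a2 * b1^+4 * b2 - 96 * a1^+8 * b1 * b2^+4 + 32 * a1^+8 * b1^+3 * b2^+2).

Definition c032 {K : comNzRingType} (a1 a2 b1 b2 : K) : K :=
  (- 32 * a2^+5 * b1^+4 * b2^+4 - 64 * a2^+5 * b1^+6 * b2^+2 - 32 * a2^+5 * b1^+8 + 64 * a2^+6 * b1^+4 * b2^+3 + 32 * a2^+6 * b1^+6 * b2 - 32 * a2^+7 * b1^+4 * b2^+2 - 16 * a2^+7 * b1^+6 + 128 * a1 * a2^+4 * b1^+3 * b2^+5 + 256 * a1 * a2^+4 * b1^+5 * b2^+3 + 128 * a1 * a2^+4 * b1^+7 * b2 - 192 * a1 * a2^+5 * b1^+3 * b2^+4 + 144 * a1 * a2^+5 * b1^+5 * b2^+2 + 144 * a1 * a2^+5 * b1^+7 + 80 * a1 * a2^+6 * b1^+5 * b2 + 64 * a1 * a2^+7 * b1^+3 * b2^+2 - 160 * a1^+2 * a2^+3 * b1^+2 * b2^+6 - 288 * a1^+2 * a2^+3 * b1^+4 * b2^+4 - 96 * a1^+2 * a2^+3 * b1^+6 * b2^+2 + 32 * a1^+2 * a2^+3 * b1^+8 + 160 * a1^+2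 * a2^+4 * b1^+2 * b2^+5 - 752 * a1^+2 * a2^+4 * b1^+4 * b2^+3 - 432 * a1^+2 * a2^+4 * b1^+6 * b2 + 160 * a1^+2 * a2^+5 * b1^+2 * b2^+4 - 480 * a1^+2 * a2^+5 * b1^+4 * b2^+2 - 80 * a1^+2 * a2^+5 * b1^+6 - 160 * a1^+2 * a2^+6 * b1^+2 * b2^+3 + 32 * a1^+2 * a2^+6 * b1^+4 * b2 + 64 * a1^+3 * a2^+2 * b1 * b2^+7 + 64 * a1^+3 * a2^+2 * b1^+3 * b2^+5 - 64 * a1^+3 * a2^+2 * b1^+5 * b2^+3 - 64 * a1^+3 * a2^+2 * b1^+7 * b2 + 992 * a1^+3 * a2^+3 * b1^+3 * b2^+4 + 416 * a1^+3 * a2^+3 * b1^+5 * b2^+2 + 64 * a1^+3 * a2^+3 * b1^+7 - 192 * a1^+3 * a2^+4 * b1 * b2^+5 + 992 * a1^+3 * a2^+4 * b1^+3 * b2^+3 + 144 * a1^+3 * a2^+4 * b1^+5 * b2 + 128 * a1^+3 * a2^+5 * b1 * b2^+4 + 64 * a1^+3 * a2^+5 * b1^+3 * b2^+2 + 32 * a1^+4 * a2 * b1^+2 * b2^+6 + 64 * a1^+4 * a2 * b1^+4 * b2^+4 + 32 * a1^+4 * a2 * b1^+6 * b2^+2 - 32 * a1^+4 * a2^+2 * b2^+7 - 480 * a1^+4 * a2^+2 * b1^+2 * b2^+5 - 192 * a1^+4 * a2^+2 * b1^+4 * b2^+3 - 224 * a1^+4 * a2^+2 * b1^+6 * b2 +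 64 * a1^+4 * a2^+3 * b2^+6 - 752 * a1^+4 * a2^+3 * b1^+2 * b2^+4 - 192 * a1^+4 * a2^+3 * b1^+4 * b2^+2 - 96 * a1^+4 * a2^+3 * b1^+6 - 32 * a1^+4 * a2^+4 * b2^+5 - 288 * a1^+4 * a2^+4 * b1^+2 * b2^+3 + 64 * a1^+4 * a2^+4 * b1^+4 * b2 + 80 * a1^+5 * a2 * b1 * b2^+6 + 144 * a1^+5 * a2 * b1^+3 * b2^+4 + 256 * a1^+5 * a2 * b1^+5 * b2^+2 + 144 * a1^+5 * a2^+2 * b1 * b2^+5 + 416 * a1^+5 * a2^+2 * b1^+3 * b2^+3 + 256 * a1^+5 * a2^+2 * b1^+5 * b2 + 256 * a1^+5 * a2^+3 * b1 * b2^+4 - 64 * a1^+5 * a2^+3 * b1^+3 * b2^+2 - 16 * a1^+6 * b2^+7 - 80 * a1^+6 * b1^+2 * b2^+5 - 96 * a1^+6 * b1^+4 * b2^+3 + 32 * a1^+6 * a2 * b2^+6 - 432 * a1^+6 * a2 * b1^+2 * b2^+4 - 224 * a1^+6 * a2 * b1^+4 * b2^+2 - 64 * a1^+6 * a2^+2 * b2^+5 - 96 * a1^+6 * a2^+2 * b1^+2 * b2^+3 + 32 * a1^+6 * a2^+2 * b1^+4 * b2 + 144 * a1^+7 * b1 * b2^+5 + 64 * a1^+7 * b1^+3 * b2^+3 + 128 * a1^+7 * a2 * b1 * b2^+4 - 64 * a1^+7 * a2 * b1^+3 * b2^+2 - 32 * a1^+8 * b2^+5 + 32 * a1^+8 *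 b1^+2 * b2^+3).

Definition c203 {K : comNzRingType} (a1 a2 b1 b2 : K) : K :=
  (- 8 * a2^+6 * b1^+4 * b2^+4 - 8 * a2^+6 * b1^+6 * b2^+2 - 48 * a2^+7 * b1^+4 * b2^+3 - 40 * a2^+7 * b1^+6 * b2 - 8 * a2^+8 * b1^+4 * b2^+2 + 24 * a2^+8 * b1^+6 + 32 * a1 * a2^+5 * b1^+3 * b2^+5 + 16 * a1 * a2^+5 * b1^+5 * b2^+3 - 16 * a1 * a2^+5 * b1^+7 * b2 + 192 * a1 * a2^+6 * b1^+3 * b2^+4 + 112 * a1 * a2^+6 * b1^+5 * b2^+2 + 8 * a1 * a2^+6 * b1^+7 + 32 * a1 * a2^+7 * b1^+3 * b2^+3 - 112 * a1 * a2^+7 * b1^+5 * b2 - 48 * a1^+2 * a2^+4 * b1^+2 * b2^+6 + 40 * a1^+2 * a2^+4 * b1^+4 * b2^+4 + 104 * a1^+2 * a2^+4 * b1^+6 * b2^+2 + 16 * a1^+2 * a2^+4 * b1^+8 - 288 * a1^+2 * a2^+5 * b1^+2 * b2^+5 - 88 * a1^+2 * a2^+5 * b1^+4 * b2^+3 - 160 * a1^+2 * a2^+5 * b1^+6 * b2 - 48 * a1^+2 * a2^+6 * b1^+2 * b2^+4 + 200 * a1^+2 * a2^+6 * b1^+4 * b2^+2 + 40 * a1^+2 * a2^+6 * b1^+6 + 32 * a1^+3 * a2^+3 * b1 * b2^+7 - 160 * a1^+3 * a2^+3 * b1^+3 * b2^+5 - 256 * a1^+3 * a2^+3 * b1^+5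 * b2^+3 - 64 * a1^+3 * a2^+3 * b1^+7 * b2 + 192 * a1^+3 * a2^+4 * b1 * b2^+6 + 32 * a1^+3 * a2^+4 * b1^+3 * b2^+4 + 568 * a1^+3 * a2^+4 * b1^+5 * b2^+2 - 32 * a1^+3 * a2^+4 * b1^+7 + 32 * a1^+3 * a2^+5 * b1 * b2^+5 - 160 * a1^+3 * a2^+5 * b1^+3 * b2^+3 - 176 * a1^+3 * a2^+5 * b1^+5 * b2 - 8 * a1^+4 * a2^+2 * b2^+8 + 200 * a1^+4 * a2^+2 * b1^+2 * b2^+6 + 304 * a1^+4 * a2^+2 * b1^+4 * b2^+4 + 96 * a1^+4 * a2^+2 * b1^+6 * b2^+2 - 48 * a1^+4 * a2^+3 * b2^+7 - 88 * a1^+4 * a2^+3 * b1^+2 * b2^+5 - 832 * a1^+4 * a2^+3 * b1^+4 * b2^+3 + 128 * a1^+4 * a2^+3 * b1^+6 * b2 - 8 * a1^+4 * a2^+4 * b2^+6 + 40 * a1^+4 * a2^+4 * b1^+2 * b2^+4 + 304 * a1^+4 * a2^+4 * b1^+4 * b2^+2 + 16 * a1^+4 * a2^+4 * b1^+6 - 112 * a1^+5 * a2 * b1 * b2^+7 - 176 * a1^+5 * a2 * b1^+3 * b2^+5 - 64 * a1^+5 * a2 * b1^+5 * b2^+3 + 112 * a1^+5 * a2^+2 * b1 * b2^+6 + 568 * a1^+5 * a2^+2 * b1^+3 * b2^+4 - 192 * a1^+5 * a2^+2 * b1^+5 * b2^+2 + 16 * a1^+5 * a2^+3 * b1 * b2^+5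 - 256 * a1^+5 * a2^+3 * b1^+3 * b2^+3 - 64 * a1^+5 * a2^+3 * b1^+5 * b2 + 24 * a1^+6 * b2^+8 + 40 * a1^+6 * b1^+2 * b2^+6 + 16 * a1^+6 * b1^+4 * b2^+4 - 40 * a1^+6 * a2 * b2^+7 - 160 * a1^+6 * a2 * b1^+2 * b2^+5 + 128 * a1^+6 * a2 * b1^+4 * b2^+3 - 8 * a1^+6 * a2^+2 * b2^+6 + 104 * a1^+6 * a2^+2 * b1^+2 * b2^+4 + 96 * a1^+6 * a2^+2 * b1^+4 * b2^+2 + 8 * a1^+7 * b1 * b2^+6 - 32 * a1^+7 * b1^+3 * b2^+4 - 16 * a1^+7 * a2 * b1 * b2^+5 - 64 * a1^+7 * a2 * b1^+3 * b2^+3 + 16 * a1^+8 * b1^+2 * b2^+4).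

Definition c113 {K : comNzRingType} (a1 a2 b1 b2 : K) : K :=
  (16 * a2^+7 * b1^+5 * b2^+2 + 48 * a2^+7 * b1^+7 + 48 * a2^+8 * b1^+5 * b2 + 48 * a1 * a2^+5 * b1^+4 * b2^+4 + 96 * a1 * a2^+5 * b1^+6 * b2^+2 + 48 * a1 * a2^+5 * b1^+8 - 48 * a1 * a2^+6 * b1^+4 * b2^+3 - 208 * a1 * a2^+6 * b1^+6 * b2 - 192 * a1 * a2^+7 * b1^+4 * b2^+2 - 192 * a1^+2 * a2^+4 * b1^+3 * b2^+5 - 384 * a1^+2 * a2^+4 * b1^+5 * b2^+3 - 192 * a1^+2 * a2^+4 * b1^+7 * b2 + 32 * a1^+2 * a2^+5 * b1^+3 * b2^+4 + 336 * a1^+2 * a2^+5 * b1^+5 * b2^+2 + 16 * a1^+2 * a2^+5 * b1^+7 + 288 * a1^+2 * a2^+6 * b1^+3 * b2^+3 + 96 * a1^+2 * a2^+6 * b1^+5 * b2 + 288 * a1^+3 * a2^+3 * b1^+2 * b2^+6 + 576 * a1^+3 * a2^+3 * b1^+4 * b2^+4 + 288 * a1^+3 * a2^+3 * b1^+6 * b2^+2 + 32 * a1^+3 * a2^+4 * b1^+2 * b2^+5 - 176 * a1^+3 * a2^+4 * b1^+4 * b2^+3 - 48 * a1^+3 * a2^+4 * b1^+6 * b2 - 192 * a1^+3 * a2^+5 * b1^+2 * b2^+4 - 384 * a1^+3 * a2^+5 * b1^+4 * b2^+2 - 192 * a1^+4 * a2^+2 * b1 * b2^+7 - 384 * a1^+4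 * a2^+2 * b1^+3 * b2^+5 - 192 * a1^+4 * a2^+2 * b1^+5 * b2^+3 - 48 * a1^+4 * a2^+3 * b1 * b2^+6 - 176 * a1^+4 * a2^+3 * b1^+3 * b2^+4 + 32 * a1^+4 * a2^+3 * b1^+5 * b2^+2 + 48 * a1^+4 * a2^+4 * b1 * b2^+5 + 576 * a1^+4 * a2^+4 * b1^+3 * b2^+3 + 48 * a1^+4 * a2^+4 * b1^+5 * b2 + 48 * a1^+5 * a2 * b2^+8 + 96 * a1^+5 * a2 * b1^+2 * b2^+6 + 48 * a1^+5 * a2 * b1^+4 * b2^+4 + 16 * a1^+5 * a2^+2 * b2^+7 + 336 * a1^+5 * a2^+2 * b1^+2 * b2^+5 + 32 * a1^+5 * a2^+2 * b1^+4 * b2^+3 - 384 * a1^+5 * a2^+3 * b1^+2 * b2^+4 - 192 * a1^+5 * a2^+3 * b1^+4 * b2^+2 - 208 * a1^+6 * a2 * b1 * b2^+6 - 48 * a1^+6 * a2 * b1^+3 * b2^+4 + 96 * a1^+6 * a2^+2 * b1 * b2^+5 + 288 * a1^+6 * a2^+2 * b1^+3 * b2^+3 + 48 * a1^+7 * b2^+7 + 16 * a1^+7 * b1^+2 * b2^+5 - 192 * a1^+7 * a2 * b1^+2 * b2^+4 + 48 * a1^+8 * b1 * b2^+5).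

Definition c023 {K : comNzRingType} (a1 a2 b1 b2 : K) : K :=
  (16 * a2^+6 * b1^+4 * b2^+4 + 40 * a2^+6 * b1^+6 * b2^+2 + 24 * a2^+6 * b1^+8 - 32 * a2^+7 * b1^+4 * b2^+3 + 8 * a2^+7 * b1^+6 * b2 + 16 * a2^+8 * b1^+4 * b2^+2 - 64 * a1 * a2^+5 * b1^+3 * b2^+5 - 176 * a1 * a2^+5 * b1^+5 * b2^+3 - 112 * a1 * a2^+5 * b1^+7 * b2 + 128 * a1 * a2^+6 * b1^+3 * b2^+4 - 160 * a1 * a2^+6 * b1^+5 * b2^+2 - 40 * a1 * a2^+6 * b1^+7 - 64 * a1 * a2^+7 * b1^+3 * b2^+3 - 16 * a1 * a2^+7 * b1^+5 * b2 + 96 * a1^+2 * a2^+4 * b1^+2 * b2^+6 + 304 * a1^+2 * a2^+4 * b1^+4 * b2^+4 + 200 * a1^+2 * a2^+4 * b1^+6 * b2^+2 - 8 * a1^+2 * a2^+4 * b1^+8 - 192 * a1^+2 * a2^+5 * b1^+2 * b2^+5 + 568 * a1^+2 * a2^+5 * b1^+4 * b2^+3 + 112 * a1^+2 * a2^+5 * b1^+6 * b2 + 96 * a1^+2 * a2^+6 * b1^+2 * b2^+4 + 104 * a1^+2 * a2^+6 * b1^+4 * b2^+2 - 8 * a1^+2 * a2^+6 * b1^+6 - 64 * a1^+3 * a2^+3 * b1 * b2^+7 - 256 * a1^+3 * a2^+3 * b1^+3 * b2^+5 - 160 * a1^+3 * a2^+3 * b1^+5 * b2^+3 + 32 * a1^+3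 * a2^+3 * b1^+7 * b2 + 128 * a1^+3 * a2^+4 * b1 * b2^+6 - 832 * a1^+3 * a2^+4 * b1^+3 * b2^+4 - 88 * a1^+3 * a2^+4 * b1^+5 * b2^+2 - 48 * a1^+3 * a2^+4 * b1^+7 - 64 * a1^+3 * a2^+5 * b1 * b2^+5 - 256 * a1^+3 * a2^+5 * b1^+3 * b2^+3 + 16 * a1^+3 * a2^+5 * b1^+5 * b2 + 16 * a1^+4 * a2^+2 * b2^+8 + 104 * a1^+4 * a2^+2 * b1^+2 * b2^+6 + 40 * a1^+4 * a2^+2 * b1^+4 * b2^+4 - 48 * a1^+4 * a2^+2 * b1^+6 * b2^+2 - 32 * a1^+4 * a2^+3 * b2^+7 + 568 * a1^+4 * a2^+3 * b1^+2 * b2^+5 + 32 * a1^+4 * a2^+3 * b1^+4 * b2^+3 + 192 * a1^+4 * a2^+3 * b1^+6 * b2 + 16 * a1^+4 * a2^+4 * b2^+6 + 304 * a1^+4 * a2^+4 * b1^+2 * b2^+4 + 40 * a1^+4 * a2^+4 * b1^+4 * b2^+2 - 8 * a1^+4 * a2^+4 * b1^+6 - 16 * a1^+5 * a2 * b1 * b2^+7 + 16 * a1^+5 * a2 * b1^+3 * b2^+5 + 32 * a1^+5 * a2 * b1^+5 * b2^+3 - 160 * a1^+5 * a2^+2 * b1 * b2^+6 - 88 * a1^+5 * a2^+2 * b1^+3 * b2^+4 - 288 * a1^+5 * a2^+2 * b1^+5 * b2^+2 - 176 * a1^+5 * a2^+3 * b1 * b2^+5 - 160 * a1^+5 * a2^+3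 * b1^+3 * b2^+3 + 32 * a1^+5 * a2^+3 * b1^+5 * b2 - 8 * a1^+6 * b1^+2 * b2^+6 - 8 * a1^+6 * b1^+4 * b2^+4 + 8 * a1^+6 * a2 * b2^+7 + 112 * a1^+6 * a2 * b1^+2 * b2^+5 + 192 * a1^+6 * a2 * b1^+4 * b2^+3 + 40 * a1^+6 * a2^+2 * b2^+6 + 200 * a1^+6 * a2^+2 * b1^+2 * b2^+4 - 48 * a1^+6 * a2^+2 * b1^+4 * b2^+2 - 40 * a1^+7 * b1 * b2^+6 - 48 * a1^+7 * b1^+3 * b2^+4 - 112 * a1^+7 * a2 * b1 * b2^+5 + 32 * a1^+7 * a2 * b1^+3 * b2^+3 + 24 * a1^+8 * b2^+6 - 8 * a1^+8 * b1^+2 * b2^+4).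

Definition c104 {K : comNzRingType} (a1 a2 b1 b2 : K) : K :=
  (- 8 * a2^+8 * b1^+7 - 8 * a1 * a2^+6 * b1^+6 * b2^+2 - 8 * a1 * a2^+6 * b1^+8 + 48 * a1 * a2^+7 * b1^+6 * b2 + 48 * a1^+2 * a2^+5 * b1^+5 * b2^+3 + 48 * a1^+2 * a2^+5 * b1^+7 * b2 - 120 * a1^+2 * a2^+6 * b1^+5 * b2^+2 - 8 * a1^+2 * a2^+6 * b1^+7 - 120 * a1^+3 * a2^+4 * b1^+4 * b2^+4 - 120 * a1^+3 * a2^+4 * b1^+6 * b2^+2 + 160 * a1^+3 * a2^+5 * b1^+4 * b2^+3 + 48 * a1^+3 * a2^+5 * b1^+6 * b2 + 160 * a1^+4 * a2^+3 * b1^+3 * b2^+5 + 160 * a1^+4 * a2^+3 * b1^+5 * b2^+3 - 120 * a1^+4 * a2^+4 * b1^+3 * b2^+4 - 120 * a1^+4 * a2^+4 * b1^+5 * b2^+2 - 120 * a1^+5 * a2^+2 * b1^+2 * b2^+6 - 120 * a1^+5 * a2^+2 * b1^+4 * b2^+4 + 48 * a1^+5 * a2^+3 * b1^+2 * b2^+5 + 160 * a1^+5 * a2^+3 * b1^+4 * b2^+3 + 48 * a1^+6 * a2 * b1 * b2^+7 + 48 * a1^+6 * a2 * b1^+3 * b2^+5 - 8 * a1^+6 * a2^+2 * b1 * b2^+6 - 120 * a1^+6 * a2^+2 * b1^+3 * b2^+4 - 8 * a1^+7 * b2^+8 - 8 * a1^+7 * b1^+2 * b2^+6 + 48 * a1^+7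 * a2 * b1^+2 * b2^+5 - 8 * a1^+8 * b1 * b2^+6).

Definition c014 {K : comNzRingType} (a1 a2 b1 b2 : K) : K :=
  (- 8 * a2^+7 * b1^+6 * b2^+2 - 8 * a2^+7 * b1^+8 - 8 * a2^+8 * b1^+6 * b2 + 48 * a1 * a2^+6 * b1^+5 * b2^+3 + 48 * a1 * a2^+6 * b1^+7 * b2 + 48 * a1 * a2^+7 * b1^+5 * b2^+2 - 120 * a1^+2 * a2^+5 * b1^+4 * b2^+4 - 120 * a1^+2 * a2^+5 * b1^+6 * b2^+2 - 120 * a1^+2 * a2^+6 * b1^+4 * b2^+3 - 8 * a1^+2 * a2^+6 * b1^+6 * b2 + 160 * a1^+3 * a2^+4 * b1^+3 * b2^+5 + 160 * a1^+3 * a2^+4 * b1^+5 * b2^+3 + 160 * a1^+3 * a2^+5 * b1^+3 * b2^+4 + 48 * a1^+3 * a2^+5 * b1^+5 * b2^+2 - 120 * a1^+4 * a2^+3 * b1^+2 * b2^+6 - 120 * a1^+4 * a2^+3 * b1^+4 * b2^+4 - 120 * a1^+4 * a2^+4 * b1^+2 * b2^+5 - 120 * a1^+4 * a2^+4 * b1^+4 * b2^+3 + 48 * a1^+5 * a2^+2 * b1 * b2^+7 + 48 * a1^+5 * a2^+2 * b1^+3 * b2^+5 + 48 * a1^+5 * a2^+3 * b1 * b2^+6 + 160 * a1^+5 * a2^+3 * b1^+3 * b2^+4 - 8 * a1^+6 * a2 * b2^+8 - 8 * a1^+6 * a2 * b1^+2 * b2^+6 - 8 * a1^+6 * a2^+2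 * b2^+7 - 120 * a1^+6 * a2^+2 * b1^+2 * b2^+5 + 48 * a1^+7 * a2 * b1 * b2^+6 - 8 * a1^+8 * b2^+7).

Definition c005 {K : comNzRingType} (a1 a2 b1 b2 : K) : K :=
  (a2^+8 * b1^+8 - 8 * a1 * a2^+7 * b1^+7 * b2 + 28 * a1^+2 * a2^+6 * b1^+6 * b2^+2 - 56 * a1^+3 * a2^+5 * b1^+5 * b2^+3 + 70 * a1^+4 * a2^+4 * b1^+4 * b2^+4 - 56 * a1^+5 * a2^+3 * b1^+3 * b2^+5 + 28 * a1^+6 * a2^+2 * b1^+2 * b2^+6 - 8 * a1^+7 * a2 * b1 * b2^+7 + a1^+8 * b2^+8).

Definition Gform {K : comNzRingType} (u v t a1 a2 b1 b2 : K) : K :=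
  c500 a1 a2 b1 b2 * (u ^+ 5 * v ^+ 0 * t ^+ 0)
  + c410 a1 a2 b1 b2 * (u ^+ 4 * v ^+ 1 * t ^+ 0)
  + c320 a1 a2 b1 b2 * (u ^+ 3 * v ^+ 2 * t ^+ 0)
  + c230 a1 a2 b1 b2 * (u ^+ 2 * v ^+ 3 * t ^+ 0)
  + c140 a1 a2 b1 b2 * (u ^+ 1 * v ^+ 4 * t ^+ 0)
  + c050 a1 a2 b1 b2 * (u ^+ 0 * v ^+ 5 * t ^+ 0)
  + c401 a1 a2 b1 b2 * (u ^+ 4 * v ^+ 0 * t ^+ 1)
  + c311 a1 a2 b1 b2 * (u ^+ 3 * v ^+ 1 * t ^+ 1)
  + c221 a1 a2 b1 b2 * (u ^+ 2 * v ^+ 2 * t ^+ 1)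
  + c131 a1 a2 b1 b2 * (u ^+ 1 * v ^+ 3 * t ^+ 1)
  + c041 a1 a2 b1 b2 * (u ^+ 0 * v ^+ 4 * t ^+ 1)
  + c302 a1 a2 b1 b2 * (u ^+ 3 * v ^+ 0 * t ^+ 2)
  + c212 a1 a2 b1 b2 * (u ^+ 2 * v ^+ 1 * t ^+ 2)
  + c122 a1 a2 b1 b2 * (u ^+ 1 * v ^+ 2 * t ^+ 2)
  + c032 a1 a2 b1 b2 * (u ^+ 0 * v ^+ 3 * t ^+ 2)
  + c203 a1 a2 b1 b2 * (u ^+ 2 * v ^+ 0 * t ^+ 3)
  + c113 a1 a2 b1 b2 * (u ^+ 1 * v ^+ 1 * t ^+ 3)
  + c023 a1 a2 b1 b2 * (u ^+ 0 * v ^+ 2 * t ^+ 3)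
  + c104 a1 a2 b1 b2 * (u ^+ 1 * v ^+ 0 * t ^+ 4)
  + c014 a1 a2 b1 b2 * (u ^+ 0 * v ^+ 1 * t ^+ 4)
  + c005 a1 a2 b1 b2 * (u ^+ 0 * v ^+ 0 * t ^+ 5).

Definition Gsum {K : comNzRingType} (f : RR -> K) (a1 a2 b1 b2 : RR) (x y t : K) : K :=
  f (c500 a1 a2 b1 b2) * (x ^+ 5 * y ^+ 0 * t ^+ 0)
  + f (c410 a1 a2 b1 b2) * (x ^+ 4 * y ^+ 1 * t ^+ 0)
  + f (c320 a1 a2 b1 b2) * (x ^+ 3 * y ^+ 2 * t ^+ 0)
  + f (c230 a1 a2 b1 b2) * (x ^+ 2 * y ^+ 3 * t ^+ 0)
  + f (c140 a1 a2 b1 b2) * (x ^+ 1 * y ^+ 4 * t ^+ 0)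
  + f (c050 a1 a2 b1 b2) * (x ^+ 0 * y ^+ 5 * t ^+ 0)
  + f (c401 a1 a2 b1 b2) * (x ^+ 4 * y ^+ 0 * t ^+ 1)
  + f (c311 a1 a2 b1 b2) * (x ^+ 3 * y ^+ 1 * t ^+ 1)
  + f (c221 a1 a2 b1 b2) * (x ^+ 2 * y ^+ 2 * t ^+ 1)
  + f (c131 a1 a2 b1 b2) * (x ^+ 1 * y ^+ 3 * t ^+ 1)
  + f (c041 a1 a2 b1 b2) * (x ^+ 0 * y ^+ 4 * t ^+ 1)
  + f (c302 a1 a2 b1 b2) * (x ^+ 3 * y ^+ 0 * t ^+ 2)
  + f (c212 a1 a2 b1 b2) * (x ^+ 2 * y ^+ 1 * t ^+ 2)
  + f (c122 a1 a2 b1 b2) * (x ^+ 1 * y ^+ 2 * t ^+ 2)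
  + f (c032 a1 a2 b1 b2) * (x ^+ 0 * y ^+ 3 * t ^+ 2)
  + f (c203 a1 a2 b1 b2) * (x ^+ 2 * y ^+ 0 * t ^+ 3)
  + f (c113 a1 a2 b1 b2) * (x ^+ 1 * y ^+ 1 * t ^+ 3)
  + f (c023 a1 a2 b1 b2) * (x ^+ 0 * y ^+ 2 * t ^+ 3)
  + f (c104 a1 a2 b1 b2) * (x ^+ 1 * y ^+ 0 * t ^+ 4)
  + f (c014 a1 a2 b1 b2) * (x ^+ 0 * y ^+ 1 * t ^+ 4)
  + f (c005 a1 a2 b1 b2) * (x ^+ 0 * y ^+ 0 * t ^+ 5).
Definition Fstruct {K : comNzRingType} (Q A B C D : K) : K :=
  Q ^+ 4 - 8 * (Q ^+ 2 * (A + B + C)) + 64 * (Q * D)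
  + 16 * (A ^+ 2 + B ^+ 2 + C ^+ 2) - 32 * (A * B + B * C + C * A).

Definition Fpieces {K : comNzRingType} (s0 s1 s2 n0 n1 n2 c01 c12 c20 W : K) : K :=
  Fstruct (n0 * s0 + n1 * s1 + n2 * s2 - W ^+ 2) (c01 ^+ 2 * (s0 * s1))
    (c12 ^+ 2 * (s1 * s2)) (c20 ^+ 2 * (s2 * s0)) (c01 * c12 * c20 * (s0 * s1 * s2)).

Definition Fform {K : comNzRingType} (u v a1 a2 b1 b2 : K) : K :=
  Fpieces (u ^+ 2 + v ^+ 2) ((u - a1) ^+ 2 + (v - a2) ^+ 2) ((u - b1) ^+ 2 + (v - b2) ^+ 2)
   ((a1 - b1) * (a1 - b1) + (a2 - b2) * (a2 - b2)) (b1 * b1 + b2 * b2)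
   ((- a1) * (- a1) + (- a2) * (- a2))
   ((a1 - b1) * b1 + (a2 - b2) * b2) (b1 * (- a1) + b2 * (- a2))
   ((- a1) * (a1 - b1) + (- a2) * (a2 - b2)) (a1 * b2 - a2 * b1).

Lemma core1 {K : comNzRingType} (u v a1 a2 b1 b2 : K) :
  Fform u v a1 a2 b1 b2 = Gform u v 1 a1 a2 b1 b2.
Proof. rewrite /Fform /Fpieces /Fstruct /Gform /c500 /c410 /c320 /c230 /c140 /c050 /c401 /c311 /c221 /c131 /c041 /c302 /c212 /c122 /c032 /c203 /c113 /c023 /c104 /c014 /c005. ring. Qed.

Lemma core2 {K : comNzRingType} (u v a1 a2 b1 b2 : K) :
  Gform u v 0 a1 a2 b1 b2 = -64 * (a1 * b2 - a2 * b1)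
    * (((a1 - b1) ^+ 2 + (a2 - b2) ^+ 2) * (b1 ^+ 2 + b2 ^+ 2) * (a1 ^+ 2 + a2 ^+ 2))
    * (u ^+ 2 + v ^+ 2)
    * (((a1 - b1) * v - (a2 - b2) * u) * (b1 * v - b2 * u) * ((- a1) * v - (- a2) * u)).
Proof. rewrite /Gform /c500 /c410 /c320 /c230 /c140 /c050 /c401 /c311 /c221 /c131 /c041 /c302 /c212 /c122 /c032 /c203 /c113 /c023 /c104 /c014 /c005. ring. Qed.

Lemma Gsum_morph {K : comNzRingType} (f : {rmorphism RR -> K}) a1 a2 b1 b2 (x y t : K) :
  Gsum f a1 a2 b1 b2 x y t = Gform x y t (f a1) (f a2) (f b1) (f b2).
Proof. rewrite /Gsum /Gform /c500 /c410 /c320 /c230 /c140 /c050 /c401 /c311 /c221 /c131 /c041 /c302 /c212 /c122 /c032 /c203 /c113 /c023 /c104 /c014 /c005. ring. Qed.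


Lemma Gsum_comp {K K' : comNzRingType} (g : {rmorphism K -> K'}) (f : RR -> K)
   a1 a2 b1 b2 (x y t : K) :
  g (Gsum f a1 a2 b1 b2 x y t) = Gsum (g \o f) a1 a2 b1 b2 (g x) (g y) (g t).
Proof. by rewrite /Gsum !rmorphD !rmorphM !rmorphXn. Qed.

Lemma Gsum_ext {K : comNzRingType} (f g : RR -> K) a1 a2 b1 b2 (x y t : K) :
  f =1 g -> Gsum f a1 a2 b1 b2 x y t = Gsum g a1 a2 b1 b2 x y t.
Proof. by move=> E; rewrite /Gsum !E. Qed.

Definition Uh (x0 : RR) : {mpoly RR[3]} := 'X_o30 - x0 *: 'X_o32.
Definition Vh (y0 : RR) : {mpoly RR[3]} := 'X_o31 - y0 *: 'X_o32.
Definition Th : {mpoly RR[3]} := 'X_o32.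

Definition Gh (x0 y0 a1 a2 b1 b2 : RR) : {mpoly RR[3]} :=
  Gsum (@mpolyC 3 RR) a1 a2 b1 b2 (Uh x0) (Vh y0) Th.

Lemma X_homog (i : 'I_3) : ('X_i : {mpoly RR[3]}) \is 1.-homog.
Proof. apply/dhomogP => m; rewrite msuppX inE => /eqP ->; exact: mdeg1. Qed.

Lemma C_homog (c : RR) : (c%:MP : {mpoly RR[3]}) \is 0.-homog.
Proof. rewrite -[c%:MP]mulr1 mul_mpolyC; apply: dhomogZ; exact: dhomog1. Qed.

Lemma term_homog (c x0 y0 : RR) i j k :
  c%:MP * (Uh x0 ^+ i * Vh y0 ^+ j * Th ^+ k) \is (i + j + k).-homog.
Proof.
have hU : Uh x0 \is 1.-homog by rewrite /Uh; apply: rpredB; [exact: X_homog|apply: dhomogZ; exact: X_homog].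
have hV : Vh y0 \is 1.-homog by rewrite /Vh; apply: rpredB; [exact: X_homog|apply: dhomogZ; exact: X_homog].
have hT : Th \is 1.-homog by exact: X_homog.
have h1 : Uh x0 ^+ i * Vh y0 ^+ j * Th ^+ k \is (i + j + k).-homog.
  by have := dhomogM (dhomogM (dhomogMn i hU) (dhomogMn j hV)) (dhomogMn k hT); rewrite !mul1n.
by have := dhomogM (C_homog c) h1; rewrite add0n.
Qed.

Lemma Gh_homog x0 y0 a1 a2 b1 b2 : Gh x0 y0 a1 a2 b1 b2 \is 5.-homog.
Proof. rewrite /Gh /Gsum; repeat apply: rpredD; apply: term_homog. Qed.

Lemma Fbif_pieces (m0 m1 m2 : RR * RR) :
  Fbif m0 m1 m2 = Fpieces (sq0 m0) (sq1 m1) (sq2 m2)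
    (dot (d12 m1 m2) (d12 m1 m2))%:MP (dot (d20 m0 m2) (d20 m0 m2))%:MP
    (dot (d01 m0 m1) (d01 m0 m1))%:MP
    (dot (d12 m1 m2) (d20 m0 m2))%:MP (dot (d20 m0 m2) (d01 m0 m1))%:MP
    (dot (d01 m0 m1) (d12 m1 m2))%:MP (Wc m0 m1 m2)%:MP.
Proof.
rewrite /Fbif /Qp /P01sq /P12sq /P20sq /Pprod /Fpieces /Fstruct -!mul_mpolyC.
rewrite !rmorphXn !rmorphM !rmorph_nat.
time reflexivity.
Qed.

Lemma Fpieces_congr {K : comNzRingType} (s0 s1 s2 n0 n1 n2 c01 c12 c20 W
   n0' n1' n2' c01' c12' c20' W' : K) :
  n0 = n0' -> n1 = n1' -> n2 = n2' -> c01 = c01' -> c12 = c12' -> c20 = c20' -> W = W' ->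
  Fpieces s0 s1 s2 n0 n1 n2 c01 c12 c20 W = Fpieces s0 s1 s2 n0' n1' n2' c01' c12' c20' W'.
Proof. by move=> -> -> -> -> -> -> ->. Qed.

Lemma Fbif_rel (x0 y0 a1 a2 b1 b2 : RR) :
  Fbif (x0, y0) (a1 + x0, a2 + y0) (b1 + x0, b2 + y0) =
  Fform ('X_o20 - x0%:MP) ('X_o21 - y0%:MP) a1%:MP a2%:MP b1%:MP b2%:MP.
Proof.
set u : {mpoly RR[2]} := 'X_o20 - x0%:MP.
set v : {mpoly RR[2]} := 'X_o21 - y0%:MP.
have E0 : sq0 (x0, y0) = u ^+ 2 + v ^+ 2 by rewrite /sq0 /sqdist.
have E1 : sq1 (a1 + x0, a2 + y0) = (u - a1%:MP) ^+ 2 + (v - a2%:MP) ^+ 2.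
  by rewrite /sq1 /sqdist /= /u /v /Xp /Yp !rmorphD; congr (_ ^+ 2 + _ ^+ 2); ring.
have E2 : sq2 (b1 + x0, b2 + y0) = (u - b1%:MP) ^+ 2 + (v - b2%:MP) ^+ 2.
  by rewrite /sq2 /sqdist /= /u /v /Xp /Yp !rmorphD; congr (_ ^+ 2 + _ ^+ 2); ring.
rewrite Fbif_pieces E0 E1 E2 /Fform.
apply: Fpieces_congr; rewrite /dot /d12 /d20 /d01 /Wc /cross /vsub /=; ring.
Qed.


Definition lq2' := lq2.

Lemma Gform_congr {K : comNzRingType} (u v t a1 a2 b1 b2 u' v' t' a1' a2' b1' b2' : K) :
  u = u' -> v = v' -> t = t' -> a1 = a1' -> a2 = a2' -> b1 = b1' -> b2 = b2' ->
  Gform u v t a1 a2 b1 b2 = Gform u' v' t' a1' a2' b1' b2'.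
Proof. by move=> -> -> -> -> -> -> ->. Qed.

Lemma Gh_dehomog (x0 y0 a1 a2 b1 b2 : RR) :
  Gh x0 y0 a1 a2 b1 b2 \mPo lq2 = Fbif (x0, y0) (a1 + x0, a2 + y0) (b1 + x0, b2 + y0).
Proof.
rewrite /Gh Gsum_comp.
rewrite (@Gsum_ext _ _ (@mpolyC 2 RR)); last by move=> c /=; rewrite comp_mpolyC.
rewrite Gsum_morph Fbif_rel core1.
have eX : forall i : 'I_3, ('X_i : {mpoly RR[3]}) \mPo lq2 = lq2`_i by move=> i; rewrite comp_mpolyXU.
apply: Gform_congr => //=.
- by rewrite /Uh raddfB /= linearZ /= !eX /= -mul_mpolyC mulr1.
- by rewrite /Vh raddfB /= linearZ /= !eX /= -mul_mpolyC mulr1.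
- by rewrite /Th eX.
Qed.

Lemma Gh_evalR (x0 y0 a1 a2 b1 b2 X Y : RR) :
  (Gh x0 y0 a1 a2 b1 b2).@[pt3 X Y 0] = Gform X Y 0 a1 a2 b1 b2.
Proof.
rewrite /Gh (Gsum_comp (meval (pt3 X Y 0))).
rewrite (@Gsum_ext _ _ idfun); last by move=> c /=; rewrite mevalC.
rewrite Gsum_morph; apply: Gform_congr => //=.
- by rewrite /Uh mevalB mevalZ !mevalXU /= mulr0 subr0.
- by rewrite /Vh mevalB mevalZ !mevalXU /= mulr0 subr0.
- by rewrite /Th mevalXU.
Qed.

Local Open Scope complex_scope.

Lemma Gh_evalC (x0 y0 a1 a2 b1 b2 : RR) (X Y : RR[i]) :
  (map_mpoly (real_complex RR) (Gh x0 y0 a1 a2 b1 b2)).@[pt3 X Y 0]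
  = Gform X Y 0 a1%:C a2%:C b1%:C b2%:C.
Proof.
rewrite /Gh (Gsum_comp (map_mpoly (real_complex RR))) (Gsum_comp (meval (pt3 X Y 0))).
rewrite (@Gsum_ext _ _ (real_complex RR)); last by move=> c /=; rewrite map_mpolyC mevalC.
rewrite Gsum_morph; apply: Gform_congr => //=.
- by rewrite /Uh rmorphB /= map_mpolyZ !map_mpolyX mevalB mevalZ !mevalXU /= mulr0 subr0.
- by rewrite /Vh rmorphB /= map_mpolyZ !map_mpolyX mevalB mevalZ !mevalXU /= mulr0 subr0.
- by rewrite /Th map_mpolyX mevalXU.
Qed.

Local Close Scope complex_scope.

Lemma mderivXU' (j i : 'I_3) : ('X_j : {mpoly RR[3]})^`M(i) = ((j == i)%:R)%:MP.
Proof.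
rewrite mderivX mnm1E; case: eqP => [->|_].
  have -> : (U_(i) - U_(i))%MM = 0%MM by apply/mnmP => k; rewrite mnmBE subnn mnm0E.
  by rewrite mpolyX0 -mul_mpolyC mulr1.
by rewrite scale0r.
Qed.

Lemma mderivXn' (p : {mpoly RR[3]}) k i :
  (p ^+ k)^`M(i) = k%:R * p ^+ k.-1 * p^`M(i).
Proof.
elim: k => [|k IH]; first by rewrite expr0 -mpolyC1 mderivC mul0r mul0r.
rewrite exprS mderivM IH; case: k {IH} => [|k] /=; first by rewrite expr0 !mulr1 mul0r mulr0 addr0 mul1r.
rewrite !exprS; ring.
Qed.

Lemma pt30 (K : Type) (X Y U : K) : pt3 X Y U o30 = X. Proof. by []. Qed.
Lemma pt31 (K : Type) (X Y U : K) : pt3 X Y U o31 = Y. Proof. by []. Qed.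
Lemma pt32 (K : Type) (X Y U : K) : pt3 X Y U o32 = U. Proof. by []. Qed.

Definition dU (x0 : RR) (l : 'I_3) : RR := (o30 == l)%:R - x0 * (o32 == l)%:R.
Definition dV (y0 : RR) (l : 'I_3) : RR := (o31 == l)%:R - y0 * (o32 == l)%:R.
Definition dT (l : 'I_3) : RR := (o32 == l)%:R.

Definition dform (x0 y0 : RR) (l : 'I_3) (i j k : nat) (p q : RR) : RR :=
  i%:R * p ^+ i.-1 * dU x0 l * (q ^+ j * 0 ^+ k)
  + p ^+ i * (j%:R * q ^+ j.-1 * dV y0 l * 0 ^+ k + q ^+ j * (k%:R * 0 ^+ k.-1 * dT l)).

Lemma dterm (c x0 y0 p q : RR) (l : 'I_3) i j k :
  ((c%:MP * (Uh x0 ^+ i * Vh y0 ^+ j * Th ^+ k))^`M(l)).@[pt3 p q 0]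
  = c * dform x0 y0 l i j k p q.
Proof.
rewrite mderiv_mulC !mderivM !mderivXn' /Uh /Vh /Th !mderivB !mderivZ !mderivXU'.
rewrite !(mevalM, mevalD, mevalB, mevalZ, mevalC, mevalXU, rmorphXn, rmorph_nat) /=.
rewrite ?mevalB ?mevalN ?mevalZ ?mevalXU ?mevalC /=.
rewrite !rmorph_nat !pt30 !pt31 !pt32.
rewrite /dform /dU /dV /dT !mulr0 !subr0.
move: (p ^+ i.-1) (p ^+ i) (q ^+ j.-1) (q ^+ j) (0 ^+ k : RR) (0 ^+ k.-1 : RR)
  (i%:R : RR) (j%:R : RR) (k%:R : RR) ((0 == l)%:R : RR) ((1 == l)%:R : RR)
  ((2 == l)%:R : RR) => A B C D E F G H I J L M.
ring.
Qed.
Definition Gd (x0 y0 a1 a2 b1 b2 : RR) (l : 'I_3) (p q : RR) : RR :=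
  c500 a1 a2 b1 b2 * dform x0 y0 l 5 0 0 p q
  + c410 a1 a2 b1 b2 * dform x0 y0 l 4 1 0 p q
  + c320 a1 a2 b1 b2 * dform x0 y0 l 3 2 0 p q
  + c230 a1 a2 b1 b2 * dform x0 y0 l 2 3 0 p q
  + c140 a1 a2 b1 b2 * dform x0 y0 l 1 4 0 p q
  + c050 a1 a2 b1 b2 * dform x0 y0 l 0 5 0 p q
  + c401 a1 a2 b1 b2 * dform x0 y0 l 4 0 1 p q
  + c311 a1 a2 b1 b2 * dform x0 y0 l 3 1 1 p q
  + c221 a1 a2 b1 b2 * dform x0 y0 l 2 2 1 p q
  + c131 a1 a2 b1 b2 * dform x0 y0 l 1 3 1 p q
  + c041 a1 a2 b1 b2 * dform x0 y0 l 0 4 1 p q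
  + c302 a1 a2 b1 b2 * dform x0 y0 l 3 0 2 p q
  + c212 a1 a2 b1 b2 * dform x0 y0 l 2 1 2 p q
  + c122 a1 a2 b1 b2 * dform x0 y0 l 1 2 2 p q
  + c032 a1 a2 b1 b2 * dform x0 y0 l 0 3 2 p q
  + c203 a1 a2 b1 b2 * dform x0 y0 l 2 0 3 p q
  + c113 a1 a2 b1 b2 * dform x0 y0 l 1 1 3 p q
  + c023 a1 a2 b1 b2 * dform x0 y0 l 0 2 3 p q
  + c104 a1 a2 b1 b2 * dform x0 y0 l 1 0 4 p q
  + c014 a1 a2 b1 b2 * dform x0 y0 l 0 1 4 p q
  + c005 a1 a2 b1 b2 * dform x0 y0 l 0 0 5 p q.

Lemma Gh_grad (x0 y0 a1 a2 b1 b2 : RR) (l : 'I_3) (p q : RR) :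
  ((Gh x0 y0 a1 a2 b1 b2)^`M(l)).@[pt3 p q 0] = Gd x0 y0 a1 a2 b1 b2 l p q.
Proof. by rewrite /Gh /Gsum !mderivD !mevalD !dterm. Qed.


Lemma line0_grad (x0 y0 a1 a2 b1 b2 : RR) :
  let p := a1 - b1 in let q := a2 - b2 in
  let W := a1 * b2 - a2 * b1 in
  let lam := 16 * W ^+ 3 * (p ^+ 2 + q ^+ 2)
     * (((a1 - b1) ^+ 2 + (a2 - b2) ^+ 2) * (b1 ^+ 2 + b2 ^+ 2) * (a1 ^+ 2 + a2 ^+ 2)) in
  [/\ Gd x0 y0 a1 a2 b1 b2 o30 p q = lam * (- 4 * q),
      Gd x0 y0 a1 a2 b1 b2 o31 p q = lam * (4 * p)
    & Gd x0 y0 a1 a2 b1 b2 o32 p q = lam * (- 4 * p * (y0) + 4 * q * (x0) - 3 * W)].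
Proof.
move=> p q W lam; rewrite {}/lam {}/W; rewrite /Gd /dform /dU /dV /dT /=.
rewrite ?expr0n /= ?mulr0 ?mul0r ?addr0 ?add0r ?subr0 ?mulr1 ?mul1r ?expr0.
rewrite {}/p {}/q /c500 /c410 /c320 /c230 /c140 /c050 /c401 /c311 /c221 /c131 /c041 /c302 /c212 /c122 /c032 /c203 /c113 /c023 /c104 /c014 /c005.
split; ring.
Qed.

Lemma line1_grad (x0 y0 a1 a2 b1 b2 : RR) :
  let p := b1 in let q := b2 in
  let W := a1 * b2 - a2 * b1 in
  let lam := 16 * W ^+ 3 * (p ^+ 2 + q ^+ 2)
     * (((a1 - b1) ^+ 2 + (a2 - b2) ^+ 2) * (b1 ^+ 2 + b2 ^+ 2) * (a1 ^+ 2 + a2 ^+ 2)) in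
  [/\ Gd x0 y0 a1 a2 b1 b2 o30 p q = lam * (- 4 * q),
      Gd x0 y0 a1 a2 b1 b2 o31 p q = lam * (4 * p)
    & Gd x0 y0 a1 a2 b1 b2 o32 p q = lam * (- 4 * p * (a2 + y0) + 4 * q * (a1 + x0) - 3 * W)].
Proof.
move=> p q W lam; rewrite {}/lam {}/W; rewrite /Gd /dform /dU /dV /dT /=.
rewrite ?expr0n /= ?mulr0 ?mul0r ?addr0 ?add0r ?subr0 ?mulr1 ?mul1r ?expr0.
rewrite {}/p {}/q /c500 /c410 /c320 /c230 /c140 /c050 /c401 /c311 /c221 /c131 /c041 /c302 /c212 /c122 /c032 /c203 /c113 /c023 /c104 /c014 /c005.
split; ring.
Qed.

Lemma line2_grad (x0 y0 a1 a2 b1 b2 : RR) :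
  let p := - a1 in let q := - a2 in
  let W := a1 * b2 - a2 * b1 in
  let lam := 16 * W ^+ 3 * (p ^+ 2 + q ^+ 2)
     * (((a1 - b1) ^+ 2 + (a2 - b2) ^+ 2) * (b1 ^+ 2 + b2 ^+ 2) * (a1 ^+ 2 + a2 ^+ 2)) in
  [/\ Gd x0 y0 a1 a2 b1 b2 o30 p q = lam * (- 4 * q),
      Gd x0 y0 a1 a2 b1 b2 o31 p q = lam * (4 * p)
    & Gd x0 y0 a1 a2 b1 b2 o32 p q = lam * (- 4 * p * (b2 + y0) + 4 * q * (b1 + x0) - 3 * W)].
Proof.
move=> p q W lam; rewrite {}/lam {}/W; rewrite /Gd /dform /dU /dV /dT /=.
rewrite ?expr0n /= ?mulr0 ?mul0r ?addr0 ?add0r ?subr0 ?mulr1 ?mul1r ?expr0.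
rewrite {}/p {}/q /c500 /c410 /c320 /c230 /c140 /c050 /c401 /c311 /c221 /c131 /c041 /c302 /c212 /c122 /c032 /c203 /c113 /c023 /c104 /c014 /c005.
split; ring.
Qed.


Lemma sqsum0 (x y : RR) : x ^+ 2 + y ^+ 2 = 0 -> x = 0 /\ y = 0.
Proof.
move=> /eqP; rewrite paddr_eq0 ?sqr_ge0 // !sqrf_eq0 => /andP [/eqP -> /eqP ->].
by [].
Qed.

Lemma sqsum_neq0 (x y : RR) : (x != 0) || (y != 0) -> x ^+ 2 + y ^+ 2 != 0.
Proof.
move=> h; apply/eqP => /sqsum0 [hx hy]; move: h; by rewrite hx hy eqxx.
Qed.

Lemma asym_of (F : {mpoly RR[2]}) (a b : RR) (L : RR * RR -> RR) (lam lx ly lc : RR) :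
  gradh F a b 0 = (lam * lx, lam * ly, lam * lc) -> lam != 0 -> (lx != 0) || (ly != 0) ->
  (forall x, L x = lx * x.1 + ly * x.2 + lc) -> asymptote_at F a b L.
Proof.
move=> hg hl hxy hL; rewrite /asymptote_at hg /=.
have hn : (lam * lx, lam * ly) <> (0, 0).
  case=> /eqP; rewrite mulf_eq0 (negbTE hl) /= => /eqP ex /eqP.
  rewrite mulf_eq0 (negbTE hl) /= => /eqP ey.
  by move: hxy; rewrite ex ey eqxx.
split.
- by case=> e1 e2 _; apply: hn; rewrite e1 e2.
- exact: hn.
- move=> x; rewrite hL.
  have -> : lam * lx * x.1 + lam * ly * x.2 + lam * lc = lam * (lx * x.1 + ly * x.2 + lc) by ring.
  split; first by move/eqP; rewrite mulf_eq0 (negbTE hl) => /eqP.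
  by move=> ->; rewrite mulr0.
Qed.

Local Open Scope complex_scope.

Lemma prod5_eq0 (K : idomainType) (f a b c d e : K) : f != 0 ->
  (f * a * b * c * (d * e) = 0 <-> a = 0 \/ b = 0 \/ c = 0 \/ d = 0 \/ e = 0).
Proof.
move=> hf; split.
  move/eqP; rewrite !mulf_eq0 (negbTE hf) /=.
  case/orP => [/orP [/orP [/eqP ->|/eqP ->]|/eqP ->]|/orP [/eqP ->|/eqP ->]].
  - by left.
  - by right; left.
  - by right; right; left.
  - by right; right; right; left.
  - by right; right; right; right.
case=> [->|[->|[->|[->|->]]]]; by rewrite ?mul0r ?mulr0 ?mul0r ?mulr0.
Qed.

Lemma main_rel (x0 y0 a1 a2 b1 b2 : RR) (m0 m1 m2 : RR * RR) :
  m0 = (x0, y0) -> m1 = (a1 + x0, a2 + y0) -> m2 = (b1 + x0, b2 + y0) ->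
  Wc m0 m1 m2 != 0 ->
  let F := Fbif m0 m1 m2 in
  (forall X Y : RR[i], (X, Y) <> (0, 0) ->
     ((homogC F).@[pt3 X Y 0] = 0 <->
      (same_dir X Y (m1.1 - m2.1)%:C (m1.2 - m2.2)%:C \/
       same_dir X Y (m2.1 - m0.1)%:C (m2.2 - m0.2)%:C \/
       same_dir X Y (m0.1 - m1.1)%:C (m0.2 - m1.2)%:C \/
       same_dir X Y 1 'i%C \/
       same_dir X Y 1 (- 'i%C)))) /\
  [/\ asymptote_at F (m1.1 - m2.1) (m1.2 - m2.2) (Lline m0 m1 m2 0),
      asymptote_at F (m2.1 - m0.1) (m2.2 - m0.2) (Lline m0 m1 m2 1)
    & asymptote_at F (m0.1 - m1.1) (m0.2 - m1.2) (Lline m0 m1 m2 2)] /\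
  ~ (exists x : RR * RR,
       [/\ Lline m0 m1 m2 0 x = 0, Lline m0 m1 m2 1 x = 0
         & Lline m0 m1 m2 2 x = 0]).
Proof.
move=> -> -> ->.
set W := a1 * b2 - a2 * b1.
have eW : Wc (x0, y0) (a1 + x0, a2 + y0) (b1 + x0, b2 + y0) = W.
  by rewrite /Wc /cross /d10 /d20 /vsub /= /W; ring.
rewrite eW => hW F.
have n0nz : (a1 - b1) ^+ 2 + (a2 - b2) ^+ 2 != 0.
  apply: sqsum_neq0; rewrite -negb_and; apply/negP => /andP [/eqP h1 /eqP h2].
  move: hW; rewrite /W.
  have -> : a1 = b1 by apply/eqP; rewrite -subr_eq0 h1.
  have -> : a2 = b2 by apply/eqP; rewrite -subr_eq0 h2.
  by rewrite mulrC subrr eqxx.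
have n1nz : b1 ^+ 2 + b2 ^+ 2 != 0.
  apply: sqsum_neq0; rewrite -negb_and; apply/negP => /andP [/eqP h1 /eqP h2].
  by move: hW; rewrite /W h1 h2 !mulr0 subrr eqxx.
have n2nz : a1 ^+ 2 + a2 ^+ 2 != 0.
  apply: sqsum_neq0; rewrite -negb_and; apply/negP => /andP [/eqP h1 /eqP h2].
  by move: hW; rewrite /W h1 h2 !mul0r subrr eqxx.
have Nnz : ((a1 - b1) ^+ 2 + (a2 - b2) ^+ 2) * (b1 ^+ 2 + b2 ^+ 2) * (a1 ^+ 2 + a2 ^+ 2) != 0.
  by rewrite !mulf_neq0.
have hF : homogenize F = Gh x0 y0 a1 a2 b1 b2.
  apply: (@homog_eq _ _ 5 (a1 + b1) (a2 + b2) (Gh_homog _ _ _ _ _ _) (Gh_dehomog _ _ _ _ _ _)).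
  rewrite Gh_evalR core2.
  have c0 : (a1 - b1) * (a2 + b2) - (a2 - b2) * (a1 + b1) = 2 * W by rewrite /W; ring.
  have c1 : b1 * (a2 + b2) - b2 * (a1 + b1) = - W by rewrite /W; ring.
  have c2 : (- a1) * (a2 + b2) - (- a2) * (a1 + b1) = - W by rewrite /W; ring.
  have two0 : (2 : RR) != 0 by rewrite pnatr_eq0.
  have Snz : (a1 + b1) ^+ 2 + (a2 + b2) ^+ 2 != 0.
    apply: sqsum_neq0; rewrite -negb_and; apply/negP => /andP [/eqP h1 /eqP h2].
    move: c0; rewrite h1 h2 !mulr0 subrr => /esym/eqP; rewrite mulf_eq0 (negbTE two0) /=.
    by rewrite (negbTE hW).
  rewrite c0 c1 c2 -/W.
  rewrite !mulf_neq0 // ?oppr_eq0 ?pnatr_eq0 //.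
split.
  move=> X Y _; rewrite /homogC hF Gh_evalC core2 /same_dir /=.
  have Hi : (X * 'i - Y * 1) * (X * - 'i - Y * 1) = X ^+ 2 + Y ^+ 2.
    have -> : (X * 'i - Y * 1) * (X * - 'i - Y * 1) = - (X ^+ 2 * 'i ^+ 2) + Y ^+ 2 by ring.
    by rewrite sqr_i mulrN1 opprK.
  rewrite [X in X = 0](_ : _ = (64 * W * (((a1 - b1) ^+ 2 + (a2 - b2) ^+ 2)
     * (b1 ^+ 2 + b2 ^+ 2) * (a1 ^+ 2 + a2 ^+ 2)))%:C
     * (X * (a2 + y0 - (b2 + y0))%:C - Y * (a1 + x0 - (b1 + x0))%:C)
     * (X * (b2 + y0 - y0)%:C - Y * (b1 + x0 - x0)%:C)
     * (X * (y0 - (a2 + y0))%:C - Y * (x0 - (a1 + x0))%:C)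
     * ((X * 'i - Y * 1) * (X * - 'i - Y * 1))); last first.
    rewrite Hi /W; ring.
  apply: prod5_eq0; rewrite fmorph_eq0 !mulf_neq0 // pnatr_eq0 //.
split; first split.
- have [g0 g1 g2] := line0_grad x0 y0 a1 a2 b1 b2.
  apply: (@asym_of _ _ _ _ (16 * W ^+ 3 * ((a1 - b1) ^+ 2 + (a2 - b2) ^+ 2) * (((a1 - b1) ^+ 2 + (a2 - b2) ^+ 2) * (b1 ^+ 2 + b2 ^+ 2) * (a1 ^+ 2 + a2 ^+ 2)))
     (- 4 * (a2 - b2)) (4 * (a1 - b1)) (- 4 * (a1 - b1) * (y0) + 4 * (a2 - b2) * (x0) - 3 * W)).
  + rewrite /gradh hF !Gh_grad /=.
    have -> : a1 + x0 - (b1 + x0) = a1 - b1 by ring.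
    have -> : a2 + y0 - (b2 + y0) = a2 - b2 by ring.
    by rewrite g0 g1 g2.
  + have nl : (a1 - b1) ^+ 2 + (a2 - b2) ^+ 2 != 0 by rewrite ?sqrrN.
    by rewrite !mulf_neq0 // ?pnatr_eq0 // expf_neq0.
  + have nl : (a1 - b1) ^+ 2 + (a2 - b2) ^+ 2 != 0 by rewrite ?sqrrN.
    rewrite -negb_and; apply/negP => /andP [/eqP h1 /eqP h2].
    have e1 : a2 - b2 = 0 by move: h1 => /eqP; rewrite mulf_eq0 oppr_eq0 pnatr_eq0 /= => /eqP.
    have e2 : a1 - b1 = 0 by move: h2 => /eqP; rewrite mulf_eq0 pnatr_eq0 /= => /eqP.
    by move: nl; rewrite e1 e2 expr0n /= addr0 eqxx.
  + move=> x; rewrite /Lline eW /cross /d12 /d20 /d01 /vsub /= /W; ring.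
- have [g0 g1 g2] := line1_grad x0 y0 a1 a2 b1 b2.
  apply: (@asym_of _ _ _ _ (16 * W ^+ 3 * ((b1) ^+ 2 + (b2) ^+ 2) * (((a1 - b1) ^+ 2 + (a2 - b2) ^+ 2) * (b1 ^+ 2 + b2 ^+ 2) * (a1 ^+ 2 + a2 ^+ 2)))
     (- 4 * (b2)) (4 * (b1)) (- 4 * (b1) * (a2 + y0) + 4 * (b2) * (a1 + x0) - 3 * W)).
  + rewrite /gradh hF !Gh_grad /=.
    have -> : b1 + x0 - x0 = b1 by ring.
    have -> : b2 + y0 - y0 = b2 by ring.
    by rewrite g0 g1 g2.
  + have nl : (b1) ^+ 2 + (b2) ^+ 2 != 0 by rewrite ?sqrrN.
    by rewrite !mulf_neq0 // ?pnatr_eq0 // expf_neq0.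
  + have nl : (b1) ^+ 2 + (b2) ^+ 2 != 0 by rewrite ?sqrrN.
    rewrite -negb_and; apply/negP => /andP [/eqP h1 /eqP h2].
    have e1 : b2 = 0 by move: h1 => /eqP; rewrite mulf_eq0 oppr_eq0 pnatr_eq0 /= => /eqP.
    have e2 : b1 = 0 by move: h2 => /eqP; rewrite mulf_eq0 pnatr_eq0 /= => /eqP.
    by move: nl; rewrite e1 e2 expr0n /= addr0 eqxx.
  + move=> x; rewrite /Lline eW /cross /d12 /d20 /d01 /vsub /= /W; ring.
- have [g0 g1 g2] := line2_grad x0 y0 a1 a2 b1 b2.
  apply: (@asym_of _ _ _ _ (16 * W ^+ 3 * ((- a1) ^+ 2 + (- a2) ^+ 2) * (((a1 - b1) ^+ 2 + (a2 - b2) ^+ 2) * (b1 ^+ 2 + b2 ^+ 2) * (a1 ^+ 2 + a2 ^+ 2)))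
     (- 4 * (- a2)) (4 * (- a1)) (- 4 * (- a1) * (b2 + y0) + 4 * (- a2) * (b1 + x0) - 3 * W)).
  + rewrite /gradh hF !Gh_grad /=.
    have -> : x0 - (a1 + x0) = - a1 by ring.
    have -> : y0 - (a2 + y0) = - a2 by ring.
    by rewrite g0 g1 g2.
  + have nl : (- a1) ^+ 2 + (- a2) ^+ 2 != 0 by rewrite ?sqrrN.
    by rewrite !mulf_neq0 // ?pnatr_eq0 // expf_neq0.
  + have nl : (- a1) ^+ 2 + (- a2) ^+ 2 != 0 by rewrite ?sqrrN.
    rewrite -negb_and; apply/negP => /andP [/eqP h1 /eqP h2].
    have e1 : - a2 = 0 by move: h1 => /eqP; rewrite mulf_eq0 oppr_eq0 pnatr_eq0 /= => /eqP.
    have e2 : - a1 = 0 by move: h2 => /eqP; rewrite mulf_eq0 pnatr_eq0 /= => /eqP.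
    by move: nl; rewrite e1 e2 expr0n /= addr0 eqxx.
  + move=> x; rewrite /Lline eW /cross /d12 /d20 /d01 /vsub /= /W; ring.
move=> [x [h0 h1 h2]].
have : Lline (x0, y0) (a1 + x0, a2 + y0) (b1 + x0, b2 + y0) 0 x
     + Lline (x0, y0) (a1 + x0, a2 + y0) (b1 + x0, b2 + y0) 1 x
     + Lline (x0, y0) (a1 + x0, a2 + y0) (b1 + x0, b2 + y0) 2 x = - W.
  by rewrite /Lline eW /cross /d12 /d20 /d01 /vsub /= /W; ring.
rewrite h0 h1 h2 !addr0 => /eqP; rewrite eq_sym oppr_eq0 => /eqP hW0.
by move: hW; rewrite hW0 eqxx.
Qed.

Theorem mainTheorem3 (m0 m1 m2 : RR * RR) :
  (* m0, m1, m2 non-collinear *)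
  Wc m0 m1 m2 != 0 ->
  let F := Fbif m0 m1 m2 in
  (* ideal points of the projective closure of F = 0 (over C = R[i]) *)
  (forall X Y : RR[i], (X, Y) <> (0, 0) ->
     ((homogC F).@[pt3 X Y 0] = 0 <->
      (same_dir X Y (m1.1 - m2.1)%:C (m1.2 - m2.2)%:C \/
       same_dir X Y (m2.1 - m0.1)%:C (m2.2 - m0.2)%:C \/
       same_dir X Y (m0.1 - m1.1)%:C (m0.2 - m1.2)%:C \/
       same_dir X Y 1 'i%C \/
       same_dir X Y 1 (- 'i%C)))) /\
  (* asymptotic lines at the three real ideal points *)
  [/\ asymptote_at F (m1.1 - m2.1) (m1.2 - m2.2) (Lline m0 m1 m2 0),
      asymptote_at F (m2.1 - m0.1) (m2.2 - m0.2) (Lline m0 m1 m2 1)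
    & asymptote_at F (m0.1 - m1.1) (m0.2 - m1.2) (Lline m0 m1 m2 2)] /\
  (* L0 ∩ L1 ∩ L2 = ∅ *)
  ~ (exists x : RR * RR,
       [/\ Lline m0 m1 m2 0 x = 0, Lline m0 m1 m2 1 x = 0
         & Lline m0 m1 m2 2 x = 0]).
Proof.
apply: (@main_rel m0.1 m0.2 (m1.1 - m0.1) (m1.2 - m0.2) (m2.1 - m0.1) (m2.2 - m0.2)).
- by case: m0.
- by case: m1 => ? ? /=; rewrite !subrK.
- by case: m2 => ? ? /=; rewrite !subrK.
Qed.
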